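(* In the Nakagami model with parameters $L_c>0$, $L_s>0$, the distortion exponent achievable by the joint decoding scheme with rate $R_j=\frac{r_j}{2}\log_2\rho$, $$\Delta_j(L_s,L_c):=\sup_{r_j>0}\ \lim_{\rho\to\infty}-\frac{\log ED_j\big(\tfrac{r_j}{2}\log_2\rho\big)}{\log\rho},$$ equals $$\Delta_j(L_s,L_c)=\begin{cases}1-\dfrac{(1-L_s)^2}{L_c+1-L_s}&\text{if }L_s\le1,\\[2mm] 2-\dfrac1{L_s}&\text{if }1<L_s\le1+L_c,\\[2mm] 1+\dfrac{L_c}{L_c+1}&\text{if }L_s>1+L_c.\end{cases}$$
   Context: Nakagami model: for SNR $\rho>0$, the channel gain is $H=\rho H_0$ and the side-information gain is $\Gamma=\rho\Gamma_0$, where $H_0,\Gamma_0$ are independent, $H_0$ is Gamma distributed with shape $L_c$ and scale $1/L_c$, and $\Gamma_0$ is Gamma distributed with shape $L_s$ and scale $1/L_s$ (Gamma$(L,\theta)$ density $\frac{1}{\theta^L\Gamma(L)}x^{L-1}e^{-x/\theta}$, $x\ge0$). Define $D_d(R,\gamma)=(\gamma+2^{2R})^{-1}$. For $R_j>0$, the JDS outage set is $\mathcal O_j=\{(h,\gamma):\tfrac12\log_2(1+\tfrac{2^{2R_j}-1}{\gamma+1})\ge\tfrac12\log_2(1+h)\}$ and $ED_j(R_j)=\mathrm E[D_d(R_j,\Gamma)\mathbf 1\{(H,\Gamma)\notin\mathcal O_j\}]+\mathrm E[D_d(0,\Gamma)\mathbf 1\{(H,\Gamma)\in\mathcal O_j\}]$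 (a function of $\rho$ through $H,\Gamma$). *)

(* Defs.v *)
From Stdlib Require Import Reals Lra ClassicalEpsilon.
Open Scope R_scope.

(* Total version of the (proper) Riemann integral on [a,b]:
   value of RiemannInt when f is Riemann integrable, 0 otherwise.
   (RiemannInt does not depend on the integrability proof.) *)
Definition RI (f : R -> R) (a b : R) : R :=
  match excluded_middle_informative (inhabited (Riemann_integrable f a b)) with
  | left h => RiemannInt (epsilon h (fun _ => True))
  | right _ => 0
  end.

Definition improper_int_0_inf (f : R -> R) (l : R) : Prop :=
  forall eps : R, 0 < eps ->
    exists delta M : R, 0 < delta /\
      forall a b : R, 0 < a < delta -> M < b -> Rabs (RI f a b - l) < eps.

(* Total improper integral over (0,+oo) (0 if it does not converge). *)
Definition Iinf (f : R -> R) : R :=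
  epsilon (inhabits 0) (fun l => improper_int_0_inf f l).

Definition GammaF (L : R) : R := Iinf (fun x => Rpower x (L - 1) * exp (- x)).

Definition gamma_pdf (L theta x : R) : R :=
  / (Rpower theta L * GammaF L) * Rpower x (L - 1) * exp (- x / theta).

Definition log2 (x : R) : R := ln x / ln 2.

Definition Dd (Rt g : R) : R := / (g + Rpower 2 (2 * Rt)).

Definition outage (Rj h g : R) : Prop :=
  / 2 * log2 (1 + (Rpower 2 (2 * Rj) - 1) / (g + 1)) >= / 2 * log2 (1 + h).

Definition ind_out (Rj h g : R) : R :=
  if Rge_dec (/ 2 * log2 (1 + (Rpower 2 (2 * Rj) - 1) / (g + 1))) (/ 2 * log2 (1 + h))
  then 1 else 0.

(* Expectation of F(H, Gamma) with H = rho*H0, Gamma = rho*Gamma0,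
   H0 ~ Gamma(Lc, 1/Lc), Gamma0 ~ Gamma(Ls, 1/Ls) independent
   (iterated improper integral over the product density). *)
Definition Expect (Lc Ls rho : R) (F : R -> R -> R) : R :=
  Iinf (fun h0 => gamma_pdf Lc (/ Lc) h0 *
     Iinf (fun g0 => gamma_pdf Ls (/ Ls) g0 * F (rho * h0) (rho * g0))).

Definition EDj (Lc Ls rho Rj : R) : R :=
  Expect Lc Ls rho (fun h g => Dd Rj g * (1 - ind_out Rj h g))
  + Expect Lc Ls rho (fun h g => Dd 0 g * ind_out Rj h g).

Definition lim_infty (f : R -> R) (d : R) : Prop :=
  forall eps : R, 0 < eps -> exists M : R, forall rho : R, M < rho -> Rabs (f rho - d) < eps.

Definition exponent_fun (Lc Ls r : R) : R -> R :=
  fun rho => - ln (EDj Lc Ls rho (r / 2 * log2 rho)) / ln rho.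

Definition Delta_j (Ls Lc : R) : R :=
  if Rle_dec Ls 1 then 1 - (1 - Ls) ^ 2 / (Lc + 1 - Ls)
  else if Rle_dec Ls (1 + Lc) then 2 - / Ls
  else 1 + Lc / (Lc + 1).

(* Main.v *)
Require Import Defs.
From Stdlib Require Import Reals Lra ClassicalEpsilon Classical FunctionalExtensionality PropExtensionality.
From Coquelicot Require Import Coquelicot.
Open Scope R_scope.

Lemma RI_RInt f a b : ex_RInt f a b -> RI f a b = RInt f a b.
Proof.
  intro H. unfold RI. destruct excluded_middle_informative as [h|h].
  - rewrite (RInt_Reals f a b (epsilon h (fun _ => True))). reflexivity.
  - exfalso. apply h. constructor. apply ex_RInt_Reals_0. exact H.
Qed.

Lemma improper_unique f l l' :
  improper_int_0_inf f l -> improper_int_0_inf f l' -> l = l'.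
Proof.
  intros H1 H2. apply Rminus_diag_uniq. apply Rabs_eq_0.
  destruct (Rle_lt_dec (Rabs (l - l')) 0) as [h|h].
  { apply Rle_antisym; [exact h| apply Rabs_pos]. }
  exfalso. set (e := Rabs (l - l') / 3).
  assert (He : 0 < e) by (unfold e; lra).
  destruct (H1 e He) as [d1 [M1 [Hd1 P1]]].
  destruct (H2 e He) as [d2 [M2 [Hd2 P2]]].
  set (a := Rmin d1 d2 / 2). set (b := Rmax M1 M2 + 1).
  assert (Hm1 := Rmin_l d1 d2). assert (Hm2 := Rmin_r d1 d2).
  assert (Hm0 : 0 < Rmin d1 d2) by (apply Rmin_glb_lt; lra).
  assert (Ha : 0 < a < d1 /\ 0 < a < d2) by (unfold a; lra).
  assert (Hb1 : M1 < b) by (unfold b; generalize (Rmax_l M1 M2); lra).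
  assert (Hb2 : M2 < b) by (unfold b; generalize (Rmax_r M1 M2); lra).
  specialize (P1 a b (proj1 Ha) Hb1). specialize (P2 a b (proj2 Ha) Hb2).
  assert (Rabs (l - l') <= Rabs (RI f a b - l) + Rabs (RI f a b - l')).
  { replace (l - l') with (-(RI f a b - l) + (RI f a b - l')) by ring.
    eapply Rle_trans; [apply Rabs_triang|]. rewrite Rabs_Ropp. lra. }
  unfold e in *. lra.
Qed.

Lemma Iinf_spec f l : improper_int_0_inf f l -> Iinf f = l.
Proof.
  intro H. unfold Iinf.
  apply (improper_unique f). 2: exact H.
  apply epsilon_spec. exists l; exact H.
Qed.

Definition good (f : R -> R) :=
  (forall x, 0 < x -> 0 <= f x) /\ (forall a b, 0 < a -> a < b -> ex_RInt f a b).

Definition bnd (f : R -> R) (K : R) := forall a b, 0 < a -> a < b -> RInt f a b <= K.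

Lemma good_ex f a b : good f -> 0 < a -> a <= b -> ex_RInt f a b.
Proof.
  intros [_ H] Ha Hab. destruct (Rle_lt_or_eq_dec _ _ Hab) as [h|h].
  - apply H; auto.
  - subst. apply ex_RInt_point.
Qed.

Lemma good_mono f a b c d : good f -> 0 < a -> a <= c -> c <= d -> d <= b ->
  RInt f c d <= RInt f a b.
Proof.
  intros G Ha H1 H2 H3.
  assert (E1 : RInt f a b = RInt f a c + RInt f c d + RInt f d b).
  { rewrite <- (RInt_Chasles f a c b) by (apply good_ex; auto; lra).
    rewrite <- (RInt_Chasles f c d b) by (apply good_ex; auto; lra).
    unfold plus; simpl. ring. }
  rewrite E1.
  assert (0 <= RInt f a c).
  { apply RInt_ge_0; auto. apply good_ex; auto. intros; apply G; lra. }
  assert (0 <= RInt f d b).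
  { apply RInt_ge_0; auto. apply good_ex; auto; lra. intros; apply G; lra. }
  lra.
Qed.

Lemma improper_sup f K : good f -> bnd f K ->
  exists S, improper_int_0_inf f S /\ S <= K /\
    (forall a b, 0 < a -> a < b -> RInt f a b <= S).
Proof.
  intros G B.
  set (E := fun v => exists a b, 0 < a /\ a < b /\ v = RInt f a b).
  assert (Hbd : bound E).
  { exists K. intros v [a [b [Ha [Hab ->]]]]. apply B; auto. }
  assert (Hne : exists v, E v).
  { exists (RInt f 1 2). exists 1, 2. repeat split; lra. }
  destruct (completeness E Hbd Hne) as [S [HS1 HS2]].
  exists S. split; [|split].
  - intros eps Heps.
    assert (exists a b, 0 < a /\ a < b /\ S - eps < RInt f a b).
    { apply NNPP. intro N.
      assert (S <= S - eps); [|lra].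
      apply HS2. intros v [a [b [Ha [Hab ->]]]].
      apply Rnot_lt_le. intro h. apply N. exists a, b. auto. }
    destruct H as [a0 [b0 [Ha0 [Hab0 Hv]]]].
    exists a0, b0. split; auto.
    intros a b Ha Hb.
    assert (Hab : a < b) by lra.
    rewrite RI_RInt by (apply G; lra).
    assert (RInt f a0 b0 <= RInt f a b) by (apply good_mono; [exact G|lra..]).
    assert (RInt f a b <= S) by (apply HS1; exists a, b; repeat split; lra).
    apply Rabs_def1; lra.
  - apply HS2. intros v [a [b [Ha [Hab ->]]]]. apply B; auto.
  - intros a b Ha Hab. apply HS1. exists a, b. auto.
Qed.

Lemma Iinf_le f K : good f -> bnd f K -> Iinf f <= K.
Proof.
  intros G B. destruct (improper_sup f K G B) as [S [H1 [H2 _]]].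
  rewrite (Iinf_spec f S H1). exact H2.
Qed.

Lemma Iinf_ge f K a b : good f -> bnd f K -> 0 < a -> a < b -> RInt f a b <= Iinf f.
Proof.
  intros G B Ha Hab. destruct (improper_sup f K G B) as [S [H1 [_ H3]]].
  rewrite (Iinf_spec f S H1). auto.
Qed.

Lemma Iinf_conv f K : good f -> bnd f K -> improper_int_0_inf f (Iinf f).
Proof.
  intros G B. destruct (improper_sup f K G B) as [S [H1 _]].
  rewrite (Iinf_spec f S H1). exact H1.
Qed.

Lemma Iinf_nonneg f K : good f -> bnd f K -> 0 <= Iinf f.
Proof.
  intros G B. eapply Rle_trans; [|apply (Iinf_ge f K 1 2 G B); lra].
  apply RInt_ge_0; [lra| apply G; lra| intros; apply G; lra].
Qed.

Lemma RI_ext_pos f g a b : 0 < a -> a < b -> (forall x, 0 < x -> f x = g x) ->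
  RI f a b = RI g a b.
Proof.
  intros Ha Hab E.
  assert (E' : forall x, Rmin a b < x < Rmax a b -> f x = g x).
  { intros x Hx. apply E. rewrite Rmin_left in Hx; lra. }
  destruct (classic (ex_RInt f a b)) as [h|h].
  - rewrite !RI_RInt; auto. apply RInt_ext; auto.
    eapply ex_RInt_ext; eauto.
  - assert (h' : ~ ex_RInt g a b).
    { intro h'. apply h. eapply ex_RInt_ext; [|exact h'].
      intros; symmetry; auto. }
    unfold RI. destruct excluded_middle_informative as [i|i].
    + exfalso. destruct i as [i]. apply h. apply ex_RInt_Reals_1. exact i.
    + destruct excluded_middle_informative as [j|j]; auto.
      exfalso. destruct j as [j]. apply h'. apply ex_RInt_Reals_1. exact j.
Qed.

Lemma improper_ext_pos f g l : (forall x, 0 < x -> f x = g x) ->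
  improper_int_0_inf f l -> improper_int_0_inf g l.
Proof.
  intros E H eps Heps. destruct (H eps Heps) as [d [M [Hd P]]].
  exists d, (Rmax M d). split; auto. intros a b Ha Hb.
  rewrite <- (RI_ext_pos f g a b); try lra.
  - apply P; auto. generalize (Rmax_l M d); lra.
  - generalize (Rmax_r M d); lra.
  - exact E.
Qed.

Lemma Iinf_ext_pos f g : (forall x, 0 < x -> f x = g x) -> Iinf f = Iinf g.
Proof.
  intros E. unfold Iinf. f_equal. apply functional_extensionality. intro l.
  apply propositional_extensionality. split; apply improper_ext_pos; auto.
  intros; symmetry; auto.
Qed.

Lemma RInt_minus_R f g a b : ex_RInt f a b -> ex_RInt g a b ->
  RInt (fun x => f x - g x) a b = RInt f a b - RInt g a b.
Proof. intros H1 H2. apply (RInt_minus f g a b H1 H2). Qed.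

Lemma ex_RInt_minus_R f g a b : ex_RInt f a b -> ex_RInt g a b ->
  ex_RInt (fun x => f x - g x) a b.
Proof. intros H1 H2. apply (ex_RInt_minus f g a b H1 H2). Qed.

Lemma RInt_plus_R f g a b : ex_RInt f a b -> ex_RInt g a b ->
  RInt (fun x => f x + g x) a b = RInt f a b + RInt g a b.
Proof. intros H1 H2. apply (RInt_plus f g a b H1 H2). Qed.

Lemma RInt_scal_R f a b l : ex_RInt f a b ->
  RInt (fun x => l * f x) a b = l * RInt f a b.
Proof. intros H1. apply (RInt_scal f a b l H1). Qed.

Lemma ex_RInt_scal_R f a b l : ex_RInt f a b -> ex_RInt (fun x => l * f x) a b.
Proof. intros H1. apply (ex_RInt_scal f a b l H1). Qed.

Lemma RInt_Chasles_R f a b c : ex_RInt f a b -> ex_RInt f b c ->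
  RInt f a b + RInt f b c = RInt f a c.
Proof. intros H1 H2. apply (RInt_Chasles f a b c H1 H2). Qed.

Lemma improper_minus f g l m : (forall a b, 0 < a -> a < b -> ex_RInt f a b) ->
  (forall a b, 0 < a -> a < b -> ex_RInt g a b) ->
  improper_int_0_inf f l -> improper_int_0_inf g m ->
  improper_int_0_inf (fun x => f x - g x) (l - m).
Proof.
  intros Ef Eg H1 H2 eps Heps.
  destruct (H1 (eps/2) ltac:(lra)) as [d1 [M1 [Hd1 P1]]].
  destruct (H2 (eps/2) ltac:(lra)) as [d2 [M2 [Hd2 P2]]].
  exists (Rmin d1 d2), (Rmax (Rmax M1 M2) (Rmin d1 d2)).
  assert (Hm1 := Rmin_l d1 d2). assert (Hm2 := Rmin_r d1 d2).
  assert (Hm0 : 0 < Rmin d1 d2) by (apply Rmin_glb_lt; lra).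
  split; auto. intros a b Ha Hb.
  assert (X1 := Rmax_l (Rmax M1 M2) (Rmin d1 d2)).
  assert (X2 := Rmax_r (Rmax M1 M2) (Rmin d1 d2)).
  assert (X3 := Rmax_l M1 M2). assert (X4 := Rmax_r M1 M2).
  assert (Hab : a < b) by lra.
  rewrite RI_RInt.
  2:{ apply ex_RInt_minus_R; [apply Ef|apply Eg]; lra. }
  rewrite (RInt_minus_R f g a b) by (first [apply Ef|apply Eg]; lra).
  specialize (P1 a b ltac:(split; lra) ltac:(lra)). specialize (P2 a b ltac:(split; lra) ltac:(lra)).
  rewrite RI_RInt in P1 by (apply Ef; lra). rewrite RI_RInt in P2 by (apply Eg; lra).
  replace (RInt f a b - RInt g a b - (l - m)) with ((RInt f a b - l) - (RInt g a b - m)) by ring.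
  eapply Rle_lt_trans; [apply Rabs_triang|]. rewrite Rabs_Ropp. lra.
Qed.

Lemma exp_mono x y : x <= y -> exp x <= exp y.
Proof. intros [h|h]; [left; apply exp_increasing; auto| subst; lra]. Qed.

Lemma exd_cont (f : R -> R) x : ex_derive f x -> continuous f x.
Proof. intro H. apply (ex_derive_continuous (K:=R_AbsRing) (V:=R_NormedModule)). exact H. Qed.

Lemma rp_pos x y : 0 < Rpower x y.
Proof. unfold Rpower; apply exp_pos. Qed.

Lemma rp_base_le x y s : 0 < x -> x <= y -> 0 <= s -> Rpower x s <= Rpower y s.
Proof.
  intros Hx Hxy Hs. unfold Rpower. apply exp_mono.
  apply Rmult_le_compat_l; auto. apply ln_le; auto.
Qed.

Lemma rp_base_le_neg x y s : 0 < x -> x <= y -> s <= 0 -> Rpower y s <= Rpower x s.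
Proof.
  intros Hx Hxy Hs. unfold Rpower. apply exp_mono.
  assert (ln x <= ln y) by (apply ln_le; auto). nra.
Qed.

Lemma rp_base_lt x y s : 0 < x -> x < y -> 0 < s -> Rpower x s < Rpower y s.
Proof.
  intros Hx Hxy Hs. unfold Rpower. apply exp_increasing.
  apply Rmult_lt_compat_l; auto. apply ln_increasing; auto.
Qed.

Lemma rp_exp_le x a b : 1 <= x -> a <= b -> Rpower x a <= Rpower x b.
Proof. intros; apply Rle_Rpower; auto. Qed.

Lemma rp_exp_le_small x a b : 0 < x -> x <= 1 -> a <= b -> Rpower x b <= Rpower x a.
Proof.
  intros Hx H1 Hab. unfold Rpower. apply exp_mono.
  assert (ln x <= 0). { rewrite <- ln_1. apply ln_le; lra. } nra.
Qed.

Lemma rp_plus x a b : Rpower x (a + b) = Rpower x a * Rpower x b.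
Proof. apply Rpower_plus. Qed.

Lemma rp_opp x a : Rpower x (- a) = / Rpower x a.
Proof. apply Rpower_Ropp. Qed.

Lemma rp_mult x a b : Rpower (Rpower x a) b = Rpower x (a * b).
Proof. apply Rpower_mult. Qed.

Lemma rp_distr x y s : 0 < x -> 0 < y -> Rpower (x * y) s = Rpower x s * Rpower y s.
Proof. intros; rewrite Rpower_mult_distr; auto. Qed.

Lemma rp_one x : 0 < x -> Rpower x 1 = x.
Proof. apply Rpower_1. Qed.

Lemma rp_zero x : 0 < x -> Rpower x 0 = 1.
Proof. apply Rpower_O. Qed.

Lemma rp_1 s : Rpower 1 s = 1.
Proof. unfold Rpower. rewrite ln_1, Rmult_0_r. apply exp_0. Qed.

Lemma rp_inv_base x s : 0 < x -> Rpower (/ x) s = / Rpower x s.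
Proof.
  intros Hx. unfold Rpower. rewrite ln_Rinv by auto.
  replace (s * - ln x) with (- (s * ln x)) by ring. apply exp_Ropp.
Qed.

Lemma rp_continuous s x : 0 < x -> continuous (fun g => Rpower g s) x.
Proof. intros. apply exd_cont. unfold Rpower. auto_derive. lra. Qed.

Lemma rp_antider s x : 0 < x -> s <> 0 ->
  is_derive (fun g => Rpower g s / s) x (Rpower x (s - 1)).
Proof.
  intros Hx Hs. unfold Rpower. auto_derive. lra.
  replace ((s - 1) * ln x) with (s * ln x + - ln x) by ring.
  rewrite exp_plus, exp_Ropp, exp_ln by auto. field. split; lra.
Qed.

Lemma RInt_pow s a b : 0 < a -> a <= b -> s <> 0 ->
  RInt (fun g => Rpower g (s - 1)) a b = (Rpower b s - Rpower a s) / s.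
Proof.
  intros Ha Hab Hs.
  apply is_RInt_unique.
  replace ((Rpower b s - Rpower a s) / s) with (minus (Rpower b s / s) (Rpower a s / s)).
  2:{ unfold minus, plus, opp; simpl. field. auto. }
  apply (is_RInt_derive (fun g => Rpower g s / s) (fun g => Rpower g (s - 1)) a b).
  - intros x Hx. rewrite Rmin_left in Hx by auto. apply rp_antider; auto; lra.
  - intros x Hx. rewrite Rmin_left in Hx by auto. apply rp_continuous; lra.
Qed.

Lemma ex_RInt_cont_pos (f : R -> R) a b : 0 < a -> a <= b -> (forall x, 0 < x -> continuous f x) ->
  ex_RInt f a b.
Proof.
  intros Ha Hab C. apply (ex_RInt_continuous (V:=R_CompleteNormedModule)). intros z Hz.
  rewrite Rmin_left in Hz by auto. apply C; lra.
Qed.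

Lemma RInt_exp_neg L a b : 0 < L -> a <= b ->
  RInt (fun g => exp (- (L * g))) a b = (exp (- (L * a)) - exp (- (L * b))) / L.
Proof.
  intros HL Hab. apply is_RInt_unique.
  replace ((exp (- (L * a)) - exp (- (L * b))) / L)
    with (minus (- exp (- (L * b)) / L) (- exp (- (L * a)) / L)).
  2:{ unfold minus, plus, opp; simpl. field. lra. }
  apply (is_RInt_derive (fun g => - exp (- (L * g)) / L)).
  - intros x _. auto_derive; auto. field. lra.
  - intros x _. apply exd_cont. auto_derive. auto.
Qed.

Lemma bnd_split (f : R -> R) K1 K2 : good f ->
  (forall a, 0 < a -> a < 1 -> RInt f a 1 <= K1) ->
  (forall b, 1 < b -> RInt f 1 b <= K2) -> 0 <= K1 -> 0 <= K2 -> bnd f (K1 + K2).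
Proof.
  intros G H1 H2 P1 P2 a b Ha Hab.
  destruct (Rle_lt_dec b 1) as [h|h].
  - destruct (Rle_lt_or_eq_dec _ _ h) as [h'|h'].
    + assert (RInt f a b <= RInt f a 1) by (apply good_mono; [exact G|lra..]).
      specialize (H1 a Ha ltac:(lra)). lra.
    + subst. specialize (H1 a Ha Hab). lra.
  - destruct (Rle_lt_dec a 1) as [h2|h2].
    + destruct (Rle_lt_or_eq_dec _ _ h2) as [h'|h'].
      * rewrite <- (RInt_Chasles_R f a 1 b) by (apply good_ex; auto; lra).
        specialize (H1 a Ha h'). specialize (H2 b h). lra.
      * subst. specialize (H2 b h). lra.
    + assert (RInt f a b <= RInt f 1 b) by (apply good_mono; [exact G|lra..]).
      specialize (H2 b h). lra.
Qed.

Definition gk (s L : R) (g : R) := Rpower g (s - 1) * exp (- (L * g)).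

Lemma gk_cont s L x : 0 < x -> continuous (gk s L) x.
Proof. intros. apply exd_cont. unfold gk, Rpower. auto_derive. lra. Qed.

Lemma gk_pos s L x : 0 < gk s L x.
Proof. unfold gk. apply Rmult_lt_0_compat; [apply rp_pos|apply exp_pos]. Qed.

Lemma gk_good s L : good (gk s L).
Proof.
  split.
  - intros; left; apply gk_pos.
  - intros a b Ha Hab. apply ex_RInt_cont_pos; try lra. intros; apply gk_cont; auto.
Qed.

Lemma pow_le_exp k L : 0 < L -> exists C, 0 < C /\
  forall g, 1 <= g -> Rpower g k <= C * exp (L * g).
Proof.
  intros HL. destruct (Rle_lt_dec k 0) as [hk|hk].
  - exists 1. split; [lra|]. intros g Hg.
    assert (Rpower g k <= Rpower g 0) by (apply rp_exp_le; auto).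
    rewrite rp_zero in H by lra.
    assert (1 <= exp (L * g)).
    { rewrite <- exp_0. apply exp_mono. nra. }
    lra.
  - set (e := L / k). assert (He : 0 < e) by (unfold e; apply Rdiv_lt_0_compat; auto).
    exists (exp (k * (- ln e - 1))). split; [apply exp_pos|].
    intros g Hg. unfold Rpower. rewrite <- exp_plus. apply exp_mono.
    assert (Hl : ln (e * g) <= e * g - 1).
    { assert (X := exp_ineq1_le (ln (e * g))). rewrite exp_ln in X; [lra|nra]. }
    rewrite ln_mult in Hl by lra.
    assert (k * e = L) by (unfold e; field; lra).
    nra.
Qed.

Lemma gk_bnd s L : 0 < s -> 0 < L -> exists J, 0 <= J /\ bnd (gk s L) J.
Proof.
  intros Hs HL.
  destruct (pow_le_exp (s - 1) (L / 2) ltac:(lra)) as [C [HC HCb]].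
  exists (1 / s + C * (2 / L)). split.
  { assert (0 < 1/s) by (apply Rdiv_lt_0_compat; lra).
    assert (0 < 2/L) by (apply Rdiv_lt_0_compat; lra). nra. }
  apply bnd_split.
  - apply gk_good.
  - intros a Ha Ha1.
    assert (RInt (gk s L) a 1 <= RInt (fun g => Rpower g (s - 1)) a 1).
    { apply RInt_le; try lra.
      - apply (gk_good s L); lra.
      - apply ex_RInt_cont_pos; try lra. intros; apply rp_continuous; auto.
      - intros x Hx. unfold gk.
        assert (exp (- (L * x)) <= 1) by (rewrite <- exp_0; apply exp_mono; nra).
        assert (0 < Rpower x (s - 1)) by apply rp_pos. nra. }
    rewrite RInt_pow in H by lra. rewrite rp_1 in H.
    assert (0 < Rpower a s) by apply rp_pos.
    assert ((1 - Rpower a s) / s <= 1 / s).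
    { unfold Rdiv. apply Rmult_le_compat_r. left; apply Rinv_0_lt_compat; lra. lra. }
    lra.
  - intros b Hb.
    assert (RInt (gk s L) 1 b <= RInt (fun g => C * exp (- ((L / 2) * g))) 1 b).
    { apply RInt_le; try lra.
      - apply (gk_good s L); lra.
      - apply ex_RInt_cont_pos; try lra. intros; apply exd_cont; auto_derive; auto.
      - intros x Hx. unfold gk. specialize (HCb x ltac:(lra)).
        replace (- ((L/2) * x)) with (L/2 * x + - (L * x)) by field.
        rewrite exp_plus. assert (0 < exp (- (L * x))) by apply exp_pos. nra. }
    rewrite RInt_scal_R in H.
    2:{ apply ex_RInt_cont_pos; try lra. intros; apply exd_cont; auto_derive; auto. }
    rewrite RInt_exp_neg in H by lra.
    assert (0 < exp (- (L / 2 * b))) by apply exp_pos.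
    assert (exp (- (L / 2 * 1)) <= 1) by (apply Rle_trans with (exp 0); [apply exp_mono; lra| rewrite exp_0; lra]).
    assert ((exp (- (L / 2 * 1)) - exp (- (L / 2 * b))) / (L / 2) <= 2 / L).
    { apply Rmult_le_reg_r with (L/2); [lra|]. unfold Rdiv. field_simplify; try lra. }
    nra.
  - assert (0 < 1/s) by (apply Rdiv_lt_0_compat; lra). lra.
  - assert (0 < 2/L) by (apply Rdiv_lt_0_compat; lra). nra.
Qed.

Lemma cont_eps (f : R -> R) x :
  (forall e, 0 < e -> exists d, 0 < d /\ forall y, Rabs (y - x) < d -> Rabs (f y - f x) < e) ->
  continuous f x.
Proof.
  intros H. apply continuity_pt_filterlim.
  unfold continuity_pt, continue_in, limit1_in, limit_in. simpl. unfold R_dist.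
  intros e He. destruct (H e He) as [d [Hd P]]. exists d. split; auto.
  intros y [_ Hy]. apply P; auto.
Qed.

Lemma cont_eps_inv (f : R -> R) x : continuous f x ->
  forall e, 0 < e -> exists d, 0 < d /\ forall y, Rabs (y - x) < d -> Rabs (f y - f x) < e.
Proof.
  intros H. apply continuity_pt_filterlim in H.
  unfold continuity_pt, continue_in, limit1_in, limit_in in H. simpl in H. unfold R_dist in H.
  intros e He. destruct (H e He) as [d [Hd P]]. exists d. split; auto.
  intros y Hy. destruct (Req_dec y x) as [->|hne].
  - unfold Rminus; rewrite Rplus_opp_r, Rabs_R0; auto.
  - apply P. split; auto. unfold D_x, no_cond. split; auto.
Qed.

Lemma RInt_const_R a b (c : R) : RInt (fun _ => c) a b = c * (b - a).
Proof. rewrite RInt_const. unfold scal; simpl. unfold mult; simpl. ring. Qed.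

Lemma RInt_lower (f : R -> R) a b m : a <= b -> ex_RInt f a b ->
  (forall x, a < x < b -> m <= f x) -> m * (b - a) <= RInt f a b.
Proof.
  intros Hab E H.
  assert (RInt (fun _ => m) a b <= RInt f a b).
  { apply RInt_le; auto. apply ex_RInt_const. }
  rewrite RInt_const in H0. unfold scal in H0; simpl in H0. unfold mult in H0; simpl in H0. lra.
Qed.

Lemma RInt_upper (f : R -> R) a b m : a <= b -> ex_RInt f a b ->
  (forall x, a < x < b -> f x <= m) -> RInt f a b <= m * (b - a).
Proof.
  intros Hab E H.
  assert (RInt f a b <= RInt (fun _ => m) a b).
  { apply RInt_le; auto. apply ex_RInt_const. }
  rewrite RInt_const in H0. unfold scal in H0; simpl in H0. unfold mult in H0; simpl in H0. lra.
Qed.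

Definition kk (L : R) := Rmin 1 (Rpower 2 (1 - L)).

Lemma kk_pos L : 0 < kk L.
Proof. unfold kk. apply Rmin_glb_lt; [lra|apply rp_pos]. Qed.

Lemma pow_half_lower L x g : 0 < x -> x / 2 <= g -> g <= x ->
  kk L * Rpower x (L - 1) <= Rpower g (L - 1).
Proof.
  intros Hx H1 H2. unfold kk.
  assert (P := rp_pos x (L-1)).
  destruct (Rle_lt_dec 0 (L - 1)) as [h|h].
  - assert (Rpower (x/2) (L-1) <= Rpower g (L-1)) by (apply rp_base_le; lra).
    replace (x / 2) with (x * / 2) in H by lra.
    rewrite rp_distr, rp_inv_base in H by lra.
    replace (1 - L) with (- (L - 1)) by ring. rewrite rp_opp.
    assert (Rmin 1 (/ Rpower 2 (L - 1)) <= / Rpower 2 (L - 1)) by apply Rmin_r.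
    assert (0 <= Rmin 1 (/ Rpower 2 (L - 1))).
    { apply Rmin_glb; [lra|left; apply Rinv_0_lt_compat, rp_pos]. }
    nra.
  - assert (Rpower x (L-1) <= Rpower g (L-1)) by (apply rp_base_le_neg; lra).
    assert (Rmin 1 (Rpower 2 (1 - L)) <= 1) by apply Rmin_l.
    assert (0 <= Rmin 1 (Rpower 2 (1 - L))).
    { apply Rmin_glb; [lra|left; apply rp_pos]. }
    nra.
Qed.

Definition cst (L : R) := / (Rpower (/ L) L * GammaF L).

Lemma GammaF_eq L : GammaF L = Iinf (gk L 1).
Proof.
  unfold GammaF. f_equal. apply functional_extensionality. intro x.
  unfold gk. f_equal. f_equal. ring.
Qed.

Lemma GammaF_pos L : 0 < L -> 0 < GammaF L.
Proof.
  intros HL. rewrite GammaF_eq.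
  destruct (gk_bnd L 1 HL ltac:(lra)) as [J [HJ B]].
  apply Rlt_le_trans with (RInt (gk L 1) 1 2).
  2:{ apply (Iinf_ge _ J); auto; try apply gk_good; lra. }
  apply Rlt_le_trans with ((kk L * Rpower 2 (L - 1) * exp (-(1*2))) * (2 - 1)).
  { assert (0 < kk L) by apply kk_pos. assert (0 < Rpower 2 (L-1)) by apply rp_pos.
    assert (0 < exp (-(1*2))) by apply exp_pos.
    assert (0 < kk L * Rpower 2 (L - 1)) by nra. nra. }
  apply RInt_lower; try lra.
  - apply gk_good; lra.
  - intros x Hx. unfold gk.
    assert (kk L * Rpower 2 (L - 1) <= Rpower x (L - 1)) by (apply pow_half_lower; lra).
    assert (exp (-(1*2)) <= exp (-(1*x))) by (apply exp_mono; lra).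
    assert (0 < kk L) by apply kk_pos. assert (0 < Rpower 2 (L-1)) by apply rp_pos.
    assert (0 < exp (-(1*2))) by apply exp_pos.
    assert (0 < kk L * Rpower 2 (L - 1)) by nra. nra.
Qed.

Lemma cst_pos L : 0 < L -> 0 < cst L.
Proof.
  intros HL. unfold cst. apply Rinv_0_lt_compat. apply Rmult_lt_0_compat.
  apply rp_pos. apply GammaF_pos; auto.
Qed.

Lemma pdf_eq L x : 0 < L -> gamma_pdf L (/ L) x = cst L * gk L L x.
Proof.
  intros HL. unfold gamma_pdf, cst, gk.
  replace (- x / / L) with (- (L * x)) by (field; lra). ring.
Qed.

Definition trunc (q : R -> R) (t : R) (g : R) := q g * (if Rle_dec g t then 1 else 0).
Definition Gt (q : R -> R) (t : R) := Iinf (trunc q t).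

Definition nice (q : R -> R) (c s : R) :=
  (forall x, 0 < x -> continuous q x) /\ (forall x, 0 < x -> 0 <= q x) /\
  (forall x, 0 < x -> q x <= c * Rpower x (s - 1)) /\ 0 <= c /\ 0 < s.

Lemma nice_good (q : R -> R) c s : nice q c s -> good q.
Proof.
  intros [C [P _]]. split; auto. intros a b Ha Hab. apply ex_RInt_cont_pos; auto; lra.
Qed.

Lemma trunc_le (q : R -> R) t a b : 0 < a -> a < b -> b <= t -> (forall x, 0 < x -> continuous q x) ->
  ex_RInt (trunc q t) a b /\ RInt (trunc q t) a b = RInt q a b.
Proof.
  intros Ha Hab Hbt C.
  assert (E : forall x, Rmin a b < x < Rmax a b -> q x = trunc q t x).
  { intros x Hx. rewrite Rmin_left, Rmax_right in Hx by lra. unfold trunc.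
    destruct Rle_dec; [ring|lra]. }
  assert (X : ex_RInt q a b) by (apply ex_RInt_cont_pos; auto; lra).
  split.
  - eapply ex_RInt_ext; eauto.
  - symmetry. apply RInt_ext. auto.
Qed.

Lemma trunc_ge (q : R -> R) t a b : 0 < a -> a < b -> t <= a ->
  ex_RInt (trunc q t) a b /\ RInt (trunc q t) a b = 0.
Proof.
  intros Ha Hab Hta.
  assert (E : forall x, Rmin a b < x < Rmax a b -> (fun _ => 0) x = trunc q t x).
  { intros x Hx. rewrite Rmin_left, Rmax_right in Hx by lra. unfold trunc.
    destruct Rle_dec; [lra|ring]. }
  split.
  - eapply ex_RInt_ext; eauto. apply ex_RInt_const.
  - rewrite <- (RInt_ext _ _ a b E). rewrite RInt_const_R. apply Rmult_0_l.
Qed.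

Lemma trunc_mid (q : R -> R) t a b : 0 < a -> a < t -> t < b -> (forall x, 0 < x -> continuous q x) ->
  ex_RInt (trunc q t) a b /\ RInt (trunc q t) a b = RInt q a t.
Proof.
  intros Ha Hat Htb C.
  destruct (trunc_le q t a t Ha Hat (Rle_refl t) C) as [E1 R1].
  destruct (trunc_ge q t t b ltac:(lra) Htb (Rle_refl t)) as [E2 R2].
  split.
  - eapply ex_RInt_Chasles; eauto.
  - rewrite <- (RInt_Chasles_R _ a t b E1 E2). rewrite R1, R2. apply Rplus_0_r.
Qed.

Lemma trunc_good (q : R -> R) c s t : nice q c s -> good (trunc q t).
Proof.
  intros N. destruct N as [C [P _]]. split.
  - intros x Hx. unfold trunc. destruct Rle_dec; [rewrite Rmult_1_r; auto|lra].
  - intros a b Ha Hab.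
    destruct (Rle_lt_dec b t) as [h|h]; [apply trunc_le; auto|].
    destruct (Rle_lt_dec t a) as [h2|h2]; [apply trunc_ge; auto|].
    apply trunc_mid; auto.
Qed.

Lemma RInt_q_pow (q : R -> R) c s a b : nice q c s -> 0 < a -> a <= b ->
  RInt q a b <= c * ((Rpower b s - Rpower a s) / s).
Proof.
  intros N Ha Hab. destruct N as [C [P [U [Hc Hs]]]].
  rewrite <- RInt_pow by lra.
  rewrite <- RInt_scal_R.
  2:{ apply ex_RInt_cont_pos; auto. intros; apply rp_continuous; auto. }
  apply RInt_le; auto.
  - apply ex_RInt_cont_pos; auto.
  - apply ex_RInt_scal_R. apply ex_RInt_cont_pos; auto. intros; apply rp_continuous; auto.
  - intros x Hx. apply U; lra.
Qed.

Lemma RInt_q_nonneg (q : R -> R) c s a b : nice q c s -> 0 < a -> a <= b -> 0 <= RInt q a b.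
Proof.
  intros N Ha Hab. destruct N as [C [P _]].
  apply RInt_ge_0; auto. apply ex_RInt_cont_pos; auto. intros; apply P; lra.
Qed.

Lemma trunc_bnd (q : R -> R) c s t : nice q c s -> 0 < t -> bnd (trunc q t) (c * (Rpower t s / s)).
Proof.
  intros N Ht a b Ha Hab.
  assert (N' := N). destruct N' as [C [P [U [Hc Hs]]]].
  assert (K : forall b', a <= b' -> b' <= t -> RInt q a b' <= c * (Rpower t s / s)).
  { intros b' H1 H2. eapply Rle_trans; [apply (RInt_q_pow q c s); eauto|].
    apply Rmult_le_compat_l; auto. unfold Rdiv. apply Rmult_le_compat_r.
    left; apply Rinv_0_lt_compat; auto.
    assert (Rpower b' s <= Rpower t s) by (apply rp_base_le; lra).
    assert (0 < Rpower a s) by apply rp_pos. lra. }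
  assert (K0 : 0 <= c * (Rpower t s / s)).
  { apply Rmult_le_pos; auto. unfold Rdiv. apply Rmult_le_pos; [left; apply rp_pos|].
    left; apply Rinv_0_lt_compat; auto. }
  destruct (Rle_lt_dec b t) as [h|h].
  { destruct (trunc_le q t a b Ha Hab h C) as [_ ->]. apply K; lra. }
  destruct (Rle_lt_dec t a) as [h2|h2].
  { destruct (trunc_ge q t a b Ha Hab h2) as [_ ->]. auto. }
  destruct (trunc_mid q t a b Ha h2 h C) as [_ ->]. apply K; lra.
Qed.

Lemma trunc_bnd0 (q : R -> R) c s t : nice q c s -> t <= 0 -> bnd (trunc q t) 0.
Proof.
  intros N Ht a b Ha Hab. destruct (trunc_ge q t a b Ha Hab ltac:(lra)) as [_ ->]. lra.
Qed.

Lemma Gt_neg (q : R -> R) c s t : nice q c s -> t <= 0 -> Gt q t = 0.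
Proof.
  intros N Ht. apply Rle_antisym.
  - apply Iinf_le. eapply trunc_good; eauto. eapply trunc_bnd0; eauto.
  - apply (Iinf_nonneg _ 0). eapply trunc_good; eauto. eapply trunc_bnd0; eauto.
Qed.

Lemma Gt_bnd (q : R -> R) c s t : nice q c s -> 0 < t -> Gt q t <= c * (Rpower t s / s).
Proof.
  intros N Ht. apply Iinf_le. eapply trunc_good; eauto. eapply trunc_bnd; eauto.
Qed.

Lemma Gt_nonneg (q : R -> R) c s t : nice q c s -> 0 <= Gt q t.
Proof.
  intros N. destruct (Rle_lt_dec t 0) as [h|h].
  - rewrite (Gt_neg q c s t N h). lra.
  - apply (Iinf_nonneg _ _ (trunc_good q c s t N) (trunc_bnd q c s t N h)).
Qed.

Lemma Gt_ge (q : R -> R) c s t a : nice q c s -> 0 < a -> a < t -> RInt q a t <= Gt q t.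
Proof.
  intros N Ha Hat. assert (N' := N). destruct N' as [C _].
  destruct (trunc_mid q t a (t+1) Ha Hat ltac:(lra) C) as [_ R].
  rewrite <- R. apply (Iinf_ge _ (c * (Rpower t s / s))); try lra.
  eapply trunc_good; eauto. eapply trunc_bnd; eauto; lra.
Qed.

Lemma Gt_step (q : R -> R) c s t t' : nice q c s -> 0 < t -> t < t' -> Gt q t' = Gt q t + RInt q t t'.
Proof.
  intros N Ht Htt. assert (N' := N). destruct N' as [C [P _]].
  assert (H := Iinf_conv _ _ (trunc_good q c s t N) (trunc_bnd q c s t N Ht)).
  fold (Gt q t) in H.
  apply Iinf_spec. intros e He. destruct (H e He) as [d [M [Hd PP]]].
  exists (Rmin d t), (Rmax M t'). split; [apply Rmin_glb_lt; lra|].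
  intros a b Ha Hb.
  assert (X1 := Rmin_l d t). assert (X2 := Rmin_r d t).
  assert (X3 := Rmax_l M t'). assert (X4 := Rmax_r M t').
  specialize (PP a b ltac:(split; lra) ltac:(lra)).
  destruct (trunc_mid q t a b ltac:(lra) ltac:(lra) ltac:(lra) C) as [E1 R1].
  destruct (trunc_mid q t' a b ltac:(lra) ltac:(lra) ltac:(lra) C) as [E2 R2].
  rewrite RI_RInt in PP |- * by auto. rewrite R1 in PP. rewrite R2.
  rewrite <- (RInt_Chasles_R q a t t') by (apply ex_RInt_cont_pos; auto; lra).
  replace (RInt q a t + RInt q t t' - (Gt q t + RInt q t t')) with (RInt q a t - Gt q t) by ring.
  auto.
Qed.

Definition Pm (s t : R) := if Rle_dec t 0 then 0 else Rpower t s.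

Lemma Gt_mod (q : R -> R) c s t t' : nice q c s ->
  Rabs (Gt q t - Gt q t') <= c / s * Rabs (Pm s t - Pm s t').
Proof.
  intros N. assert (N' := N). destruct N' as [C [P [U [Hc Hs]]]].
  assert (Hcs : 0 <= c / s) by (unfold Rdiv; apply Rmult_le_pos; auto; left; apply Rinv_0_lt_compat; auto).
  assert (W : forall t t', t <= t' -> Rabs (Gt q t - Gt q t') <= c / s * Rabs (Pm s t - Pm s t')).
  { clear t t'. intros t t' Htt. unfold Pm.
    destruct (Rle_dec t 0) as [h1|h1]; destruct (Rle_dec t' 0) as [h2|h2].
    - rewrite (Gt_neg q c s t N h1), (Gt_neg q c s t' N h2).
      rewrite Rminus_0_r, Rabs_R0. lra.
    - rewrite (Gt_neg q c s t N h1).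
      assert (0 <= Gt q t') by (eapply Gt_nonneg; eauto).
      assert (Gt q t' <= c * (Rpower t' s / s)) by (apply Gt_bnd; [exact N|lra]).
      assert (0 < Rpower t' s) by apply rp_pos.
      replace (0 - Gt q t') with (- Gt q t') by ring. replace (0 - Rpower t' s) with (- Rpower t' s) by ring.
      rewrite !Rabs_Ropp, !Rabs_right by lra.
      replace (c / s * Rpower t' s) with (c * (Rpower t' s / s)) by (field; lra). auto.
    - lra.
    - destruct (Rle_lt_or_eq_dec _ _ Htt) as [hl|he].
      + rewrite (Gt_step q c s t t' N ltac:(lra) hl).
        assert (0 <= RInt q t t') by (eapply RInt_q_nonneg; eauto; lra).
        assert (RInt q t t' <= c * ((Rpower t' s - Rpower t s) / s)) by (eapply RInt_q_pow; eauto; lra).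
        assert (Rpower t s <= Rpower t' s) by (apply rp_base_le; lra).
        replace (Gt q t - (Gt q t + RInt q t t')) with (- RInt q t t') by ring.
        rewrite Rabs_Ropp, Rabs_right by lra.
        rewrite (Rabs_left1 (Rpower t s - Rpower t' s)) by lra.
        replace (c / s * - (Rpower t s - Rpower t' s)) with (c * ((Rpower t' s - Rpower t s) / s)) by (field; lra).
        auto.
      + subst. unfold Rminus. rewrite !Rplus_opp_r, Rabs_R0. lra. }
  destruct (Rle_lt_dec t t') as [h|h]; auto.
  rewrite Rabs_minus_sym, (Rabs_minus_sym (Pm s t)). apply W; lra.
Qed.

Lemma Pm_cont s t : 0 < s -> continuous (Pm s) t.
Proof.
  intros Hs. destruct (Rlt_le_dec 0 t) as [h|h].
  - apply (continuous_ext_loc (Pm s) (fun g => Rpower g s)).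
    + exists (mkposreal t h). intros y Hy. unfold ball in Hy; simpl in Hy.
      unfold AbsRing_ball, abs, minus, plus, opp in Hy; simpl in Hy.
      unfold Pm. destruct Rle_dec as [h'|h']; auto.
      apply Rabs_def2 in Hy. lra.
    + apply rp_continuous; auto.
  - destruct (Rle_lt_or_eq_dec _ _ h) as [hl|he].
    + apply (continuous_ext_loc (Pm s) (fun _ => 0)).
      * exists (mkposreal (-t) ltac:(lra)). intros y Hy. unfold ball in Hy; simpl in Hy.
        unfold AbsRing_ball, abs, minus, plus, opp in Hy; simpl in Hy.
        unfold Pm. destruct Rle_dec as [h'|h']; auto.
        apply Rabs_def2 in Hy. lra.
      * apply continuous_const.
    + subst. apply cont_eps. intros e He.
      exists (Rpower e (/ s)). split; [apply rp_pos|]. intros y Hy.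
      unfold Pm at 2. destruct (Rle_dec 0 0) as [_|n]; [|lra].
      rewrite Rminus_0_r in Hy |- *. unfold Pm.
      destruct Rle_dec as [h1|h1].
      * rewrite Rabs_R0; auto.
      * rewrite Rabs_right by (left; apply rp_pos).
        rewrite Rabs_right in Hy by lra.
        assert (Rpower y s < Rpower (Rpower e (/ s)) s) by (apply rp_base_lt; lra).
        rewrite rp_mult in H. replace (/ s * s) with 1 in H by (field; lra).
        rewrite rp_one in H; auto.
Qed.

Lemma Gt_cont_comp (q : R -> R) c s (phi : R -> R) h : nice q c s -> continuous phi h ->
  continuous (fun x => Gt q (phi x)) h.
Proof.
  intros N Cphi. assert (N' := N). destruct N' as [_ [_ [_ [Hc Hs]]]].
  assert (CP : continuous (fun x => Pm s (phi x)) h).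
  { apply (continuous_comp phi (Pm s)); auto. apply Pm_cont; auto. }
  apply cont_eps. intros e He.
  destruct (cont_eps_inv _ _ CP (e / (c / s + 1))) as [d [Hd P]].
  { apply Rdiv_lt_0_compat; auto.
    assert (0 <= c / s) by (unfold Rdiv; apply Rmult_le_pos; auto; left; apply Rinv_0_lt_compat; auto). lra. }
  exists d. split; auto. intros y Hy. specialize (P y Hy).
  eapply Rle_lt_trans; [apply (Gt_mod q c s); auto|].
  assert (0 <= c / s) by (unfold Rdiv; apply Rmult_le_pos; auto; left; apply Rinv_0_lt_compat; auto).
  apply Rle_lt_trans with ((c / s + 1) * Rabs (Pm s (phi y) - Pm s (phi h))).
  { assert (0 <= Rabs (Pm s (phi y) - Pm s (phi h))) by apply Rabs_pos. nra. }
  apply Rmult_lt_reg_r with (/ (c / s + 1)). apply Rinv_0_lt_compat; lra.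
  replace ((c / s + 1) * Rabs (Pm s (phi y) - Pm s (phi h)) * / (c / s + 1))
    with (Rabs (Pm s (phi y) - Pm s (phi h))) by (field; lra). exact P.
Qed.

Definition TT rho r := Rpower rho r.
Definition RJ rho r := r / 2 * log2 rho.
Definition phi rho r h := ((TT rho r - 1) / (rho * h) - 1) / rho.
Definition q0 Ls rho g := gamma_pdf Ls (/ Ls) g * Dd 0 (rho * g).
Definition q1 Ls rho r g := gamma_pdf Ls (/ Ls) g * Dd (RJ rho r) (rho * g).
Definition O1 Lc Ls rho r h :=
  gamma_pdf Lc (/ Lc) h * (Iinf (q1 Ls rho r) - Gt (q1 Ls rho r) (phi rho r h)).
Definition O2 Lc Ls rho r h := gamma_pdf Lc (/ Lc) h * Gt (q0 Ls rho) (phi rho r h).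

Lemma pow2_RJ rho r : 0 < rho -> Rpower 2 (2 * RJ rho r) = TT rho r.
Proof.
  intros H. unfold RJ, TT, log2, Rpower. f_equal.
  assert (0 < ln 2) by (apply ln_gt_0 || (rewrite <- ln_1; apply ln_increasing; lra)).
  field. lra.
Qed.

Lemma TT_gt1 rho r : 1 < rho -> 0 < r -> 1 < TT rho r.
Proof.
  intros H1 H2. unfold TT. rewrite <- (rp_zero rho) by lra. apply Rpower_lt; lra.
Qed.

Lemma Dd0 x : Dd 0 x = / (x + 1).
Proof. unfold Dd. rewrite Rmult_0_r. unfold Rpower. rewrite Rmult_0_l, exp_0. auto. Qed.

Lemma DdJ rho r x : 0 < rho -> Dd (RJ rho r) x = / (x + TT rho r).
Proof. intros H. unfold Dd. rewrite pow2_RJ; auto. Qed.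

Lemma log_cmp u v : 0 <= u -> 0 <= v ->
  (/ 2 * log2 (1 + u) >= / 2 * log2 (1 + v) <-> v <= u).
Proof.
  intros Hu Hv. unfold log2.
  assert (L2 : 0 < ln 2) by (rewrite <- ln_1; apply ln_increasing; lra).
  split.
  - intros H. apply Rnot_lt_le. intro h.
    assert (ln (1 + u) < ln (1 + v)) by (apply ln_increasing; lra).
    assert (ln (1 + u) / ln 2 < ln (1 + v) / ln 2).
    { unfold Rdiv. apply Rmult_lt_compat_r; auto. apply Rinv_0_lt_compat; auto. }
    lra.
  - intros H. assert (ln (1 + v) <= ln (1 + u)) by (apply ln_le; lra).
    assert (ln (1 + v) / ln 2 <= ln (1 + u) / ln 2).
    { unfold Rdiv. apply Rmult_le_compat_r; auto. left; apply Rinv_0_lt_compat; auto. }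
    lra.
Qed.

Lemma ind_eq rho r h g : 1 < rho -> 0 < r -> 0 < h -> 0 < g ->
  ind_out (RJ rho r) (rho * h) (rho * g) = if Rle_dec g (phi rho r h) then 1 else 0.
Proof.
  intros Hr Hr0 Hh Hg. unfold ind_out. rewrite pow2_RJ by lra.
  assert (T1 := TT_gt1 rho r Hr Hr0).
  assert (Hu : 0 <= (TT rho r - 1) / (rho * g + 1)).
  { unfold Rdiv. apply Rmult_le_pos; [lra|]. left; apply Rinv_0_lt_compat; nra. }
  assert (E : rho * h <= (TT rho r - 1) / (rho * g + 1) <-> g <= phi rho r h).
  { unfold phi. split; intro H.
    - apply Rmult_le_reg_r with rho; [lra|].
      replace (((TT rho r - 1) / (rho * h) - 1) / rho * rho) with ((TT rho r - 1) / (rho * h) - 1) by (field; lra).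
      apply Rmult_le_compat_r with (r := rho * g + 1) in H; [|nra].
      replace ((TT rho r - 1) / (rho * g + 1) * (rho * g + 1)) with (TT rho r - 1) in H by (field; nra).
      apply Rmult_le_reg_r with (rho * h); [nra|].
      replace (((TT rho r - 1) / (rho * h) - 1) * (rho * h)) with (TT rho r - 1 - rho * h) by (field; nra).
      nra.
    - apply Rmult_le_compat_r with (r := rho) in H; [|lra].
      replace (((TT rho r - 1) / (rho * h) - 1) / rho * rho) with ((TT rho r - 1) / (rho * h) - 1) in H by (field; lra).
      apply Rmult_le_compat_r with (r := rho * h) in H; [|nra].
      replace (((TT rho r - 1) / (rho * h) - 1) * (rho * h)) with (TT rho r - 1 - rho * h) in H by (field; nra).
      apply Rmult_le_reg_r with (rho * g + 1); [nra|].
      replace ((TT rho r - 1) / (rho * g + 1) * (rho * g + 1)) with (TT rho r - 1) by (field; nra).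
      nra. }
  destruct Rge_dec as [h1|h1]; destruct Rle_dec as [h2|h2]; auto.
  - exfalso. apply h2. apply E. apply (log_cmp _ _ Hu); nra.
  - exfalso. apply h1. apply log_cmp; [exact Hu|nra|]. apply E; auto.
Qed.

Lemma pdf_cont L x : 0 < x -> continuous (fun g => gamma_pdf L (/ L) g) x.
Proof. intros. apply exd_cont. unfold gamma_pdf, Rpower. auto_derive. lra. Qed.

Lemma pdf_nonneg L x : 0 < L -> 0 <= gamma_pdf L (/ L) x.
Proof.
  intros HL. rewrite pdf_eq by auto.
  left. apply Rmult_lt_0_compat; [apply cst_pos; auto|apply gk_pos].
Qed.

Lemma gk_le_pow s L x : 0 < L -> 0 < x -> gk s L x <= Rpower x (s - 1).
Proof.
  intros HL Hx. unfold gk. assert (0 < Rpower x (s-1)) by apply rp_pos.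
  assert (exp (- (L * x)) <= 1) by (rewrite <- exp_0; apply exp_mono; nra). nra.
Qed.

Lemma q0_nice Ls rho : 0 < Ls -> 1 < rho -> nice (q0 Ls rho) (cst Ls) Ls.
Proof.
  intros HL Hr. assert (Hc := cst_pos Ls HL).
  split; [|split; [|split; [|split]]]; try lra.
  - intros x Hx. apply exd_cont. unfold q0, Dd, gamma_pdf, Rpower. auto_derive.
    split; [lra|split; auto]. assert (0 < exp (2 * 0 * ln 2)) by apply exp_pos. nra.
  - intros x Hx. unfold q0. rewrite Dd0. apply Rmult_le_pos; [apply pdf_nonneg; auto|].
    left; apply Rinv_0_lt_compat; nra.
  - intros x Hx. unfold q0. rewrite Dd0, pdf_eq by auto.
    assert (gk Ls Ls x <= Rpower x (Ls - 1)) by (apply gk_le_pow; auto).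
    assert (0 < gk Ls Ls x) by apply gk_pos.
    assert (/ (rho * x + 1) <= 1).
    { rewrite <- Rinv_1. apply Rinv_le_contravar; nra. }
    assert (0 < / (rho * x + 1)) by (apply Rinv_0_lt_compat; nra).
    assert (gk Ls Ls x * / (rho * x + 1) <= gk Ls Ls x) by nra.
    apply Rle_trans with (cst Ls * gk Ls Ls x); [|apply Rmult_le_compat_l; lra].
    rewrite Rmult_assoc. apply Rmult_le_compat_l; lra.
Qed.

Lemma q1_nice Ls rho r : 0 < Ls -> 1 < rho -> 0 < r -> nice (q1 Ls rho r) (cst Ls) Ls.
Proof.
  intros HL Hr Hr0. assert (Hc := cst_pos Ls HL). assert (T1 := TT_gt1 rho r Hr Hr0).
  split; [|split; [|split; [|split]]]; try lra.
  - intros x Hx.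
    assert (E : q1 Ls rho r = fun g => gamma_pdf Ls (/ Ls) g * / (rho * g + TT rho r)).
    { apply functional_extensionality. intro g. unfold q1. rewrite DdJ by lra. auto. }
    rewrite E. apply exd_cont. unfold gamma_pdf, Rpower. auto_derive.
    split; [lra|split; auto]. nra.
  - intros x Hx. unfold q1. rewrite DdJ by lra. apply Rmult_le_pos; [apply pdf_nonneg; auto|].
    left; apply Rinv_0_lt_compat; nra.
  - intros x Hx. unfold q1. rewrite DdJ, pdf_eq by lra.
    assert (gk Ls Ls x <= Rpower x (Ls - 1)) by (apply gk_le_pow; auto).
    assert (0 < gk Ls Ls x) by apply gk_pos.
    assert (/ (rho * x + TT rho r) <= 1).
    { rewrite <- Rinv_1. apply Rinv_le_contravar; nra. }
    assert (0 < / (rho * x + TT rho r)) by (apply Rinv_0_lt_compat; nra).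
    assert (gk Ls Ls x * / (rho * x + TT rho r) <= gk Ls Ls x) by nra.
    apply Rle_trans with (cst Ls * gk Ls Ls x); [|apply Rmult_le_compat_l; lra].
    rewrite Rmult_assoc. apply Rmult_le_compat_l; lra.
Qed.

Lemma bnd_le (f g : R -> R) k K : good f -> good g -> (forall x, 0 < x -> f x <= k * g x) ->
  0 <= k -> bnd g K -> bnd f (k * K).
Proof.
  intros Gf Gg H Hk B a b Ha Hab.
  apply Rle_trans with (RInt (fun x => k * g x) a b).
  - apply RInt_le; try lra. apply Gf; auto. apply ex_RInt_scal_R. apply Gg; auto.
    intros x Hx; apply H; lra.
  - rewrite RInt_scal_R by (apply Gg; auto). apply Rmult_le_compat_l; auto.
Qed.

Lemma trunc_le_q (q : R -> R) t x : 0 <= q x -> trunc q t x <= q x.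
Proof. intros H. unfold trunc. destruct Rle_dec; lra. Qed.

Lemma Gt_le_Iinf (q : R -> R) c s t K : nice q c s -> bnd q K -> Gt q t <= Iinf q.
Proof.
  intros N B. assert (G := nice_good q c s N).
  destruct (Rle_lt_dec t 0) as [h|h].
  - rewrite (Gt_neg q c s t N h). apply (Iinf_nonneg q K G B).
  - apply Iinf_le. apply (trunc_good q c s t N).
    intros a b Ha Hab. apply Rle_trans with (RInt q a b).
    + apply RInt_le; try lra. apply (trunc_good q c s t N); auto. apply G; auto.
      intros x Hx. apply trunc_le_q. apply G; lra.
    + apply (Iinf_ge q K); auto.
Qed.

Lemma Iinf_minus_Gt (q : R -> R) c s t u v K : nice q c s -> bnd q K -> 0 < u -> u < v -> t <= u ->
  RInt q u v <= Iinf q - Gt q t.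
Proof.
  intros N B Hu Huv Htu. assert (G := nice_good q c s N).
  assert (I1 : RInt q u v <= Iinf q) by (apply (Iinf_ge q K); auto).
  destruct (Rle_lt_dec t 0) as [h|h].
  - rewrite (Gt_neg q c s t N h). lra.
  - assert (Gt q t <= Iinf q - RInt q u v); [|lra].
    apply Iinf_le. apply (trunc_good q c s t N).
    intros a b Ha Hab.
    assert (A : forall b', a <= b' -> b' <= t -> RInt q a b' <= Iinf q - RInt q u v).
    { intros b' H1 H2.
      assert (RInt q a b' + RInt q u v <= RInt q a v).
      { destruct (Rle_lt_or_eq_dec _ _ H1) as [h1|h1].
        - rewrite <- (RInt_Chasles_R q a b' v) by (apply good_ex; auto; lra).
          assert (RInt q u v <= RInt q b' v) by (apply good_mono; [exact G|lra..]). lra.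
        - subst b'. rewrite RInt_point. unfold zero; simpl.
          assert (RInt q u v <= RInt q a v) by (apply good_mono; [exact G|lra..]). lra. }
      assert (RInt q a v <= Iinf q) by (apply (Iinf_ge q K); auto; lra). lra. }
    destruct (Rle_lt_dec b t) as [h1|h1].
    { destruct (trunc_le q t a b Ha Hab h1 (proj1 N)) as [_ ->]. apply A; lra. }
    destruct (Rle_lt_dec t a) as [h2|h2].
    { destruct (trunc_ge q t a b Ha Hab h2) as [_ ->]. lra. }
    destruct (trunc_mid q t a b Ha h2 h1 (proj1 N)) as [_ ->]. apply A; lra.
Qed.

Lemma q1_bnd Ls rho r : 0 < Ls -> 1 < rho -> 0 < r -> exists K, bnd (q1 Ls rho r) K.
Proof.
  intros HL Hr Hr0. destruct (gk_bnd Ls Ls HL HL) as [J [HJ B]].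
  exists (cst Ls * J). apply (bnd_le _ (gk Ls Ls)); auto.
  - apply (nice_good _ _ _ (q1_nice Ls rho r HL Hr Hr0)).
  - apply gk_good.
  - intros x Hx. unfold q1. rewrite DdJ, pdf_eq by lra.
    assert (T1 := TT_gt1 rho r Hr Hr0).
    assert (0 < gk Ls Ls x) by apply gk_pos.
    assert (/ (rho * x + TT rho r) <= 1) by (rewrite <- Rinv_1; apply Rinv_le_contravar; nra).
    assert (0 < / (rho * x + TT rho r)) by (apply Rinv_0_lt_compat; nra).
    assert (Hc := cst_pos Ls HL).
    assert (gk Ls Ls x * / (rho * x + TT rho r) <= gk Ls Ls x) by nra.
    rewrite Rmult_assoc. apply Rmult_le_compat_l; lra.
  - left; apply cst_pos; auto.
Qed.

Lemma inner2_eq Ls rho r h : 0 < Ls -> 1 < rho -> 0 < r -> 0 < h ->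
  Iinf (fun g0 => gamma_pdf Ls (/ Ls) g0 * (Dd 0 (rho * g0) * ind_out (RJ rho r) (rho * h) (rho * g0)))
  = Gt (q0 Ls rho) (phi rho r h).
Proof.
  intros HL Hr Hr0 Hh. unfold Gt. apply Iinf_ext_pos. intros g Hg.
  rewrite ind_eq by auto. unfold trunc, q0. ring.
Qed.

Lemma inner1_eq Ls rho r h : 0 < Ls -> 1 < rho -> 0 < r -> 0 < h ->
  Iinf (fun g0 => gamma_pdf Ls (/ Ls) g0 * (Dd (RJ rho r) (rho * g0) * (1 - ind_out (RJ rho r) (rho * h) (rho * g0))))
  = Iinf (q1 Ls rho r) - Gt (q1 Ls rho r) (phi rho r h).
Proof.
  intros HL Hr Hr0 Hh.
  rewrite (Iinf_ext_pos _ (fun g => q1 Ls rho r g - trunc (q1 Ls rho r) (phi rho r h) g)).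
  2:{ intros g Hg. rewrite ind_eq by auto. unfold trunc, q1. ring. }
  assert (N := q1_nice Ls rho r HL Hr Hr0).
  destruct (q1_bnd Ls rho r HL Hr Hr0) as [K B].
  apply Iinf_spec. apply improper_minus.
  - apply (nice_good _ _ _ N).
  - apply (trunc_good _ _ _ _ N).
  - apply (Iinf_conv _ K); auto. apply (nice_good _ _ _ N).
  - unfold Gt. destruct (Rle_lt_dec (phi rho r h) 0) as [h0|h0].
    + apply (Iinf_conv _ 0). apply (trunc_good _ _ _ _ N). apply (trunc_bnd0 _ _ _ _ N h0).
    + apply (Iinf_conv _ _ (trunc_good _ _ _ _ N) (trunc_bnd _ _ _ _ N h0)).
Qed.

Lemma ED_eq Lc Ls rho r : 0 < Lc -> 0 < Ls -> 1 < rho -> 0 < r ->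
  EDj Lc Ls rho (r / 2 * log2 rho) = Iinf (O1 Lc Ls rho r) + Iinf (O2 Lc Ls rho r).
Proof.
  intros Hc HL Hr Hr0. unfold EDj, Expect. change (r / 2 * log2 rho) with (RJ rho r).
  f_equal; apply Iinf_ext_pos; intros h Hh; cbv beta.
  - unfold O1. f_equal. apply inner1_eq; auto.
  - unfold O2. f_equal. apply inner2_eq; auto.
Qed.

Lemma phi_cont rho r h : 1 < rho -> 0 < h -> continuous (phi rho r) h.
Proof. intros. apply exd_cont. unfold phi. auto_derive. nra. Qed.

Lemma cont_mult_R (f g : R -> R) x : continuous f x -> continuous g x ->
  continuous (fun y => f y * g y) x.
Proof. intros. apply (continuous_mult f g x); auto. Qed.

Lemma cont_minus_R (f g : R -> R) x : continuous f x -> continuous g x ->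
  continuous (fun y => f y - g y) x.
Proof. intros. apply (continuous_minus f g x); auto. Qed.

Lemma O2_good Lc Ls rho r : 0 < Lc -> 0 < Ls -> 1 < rho -> 0 < r -> good (O2 Lc Ls rho r).
Proof.
  intros Hc HL Hr Hr0. assert (N := q0_nice Ls rho HL Hr). split.
  - intros x Hx. unfold O2. apply Rmult_le_pos; [apply pdf_nonneg; auto|].
    apply (Gt_nonneg _ _ _ _ N).
  - intros a b Ha Hab. apply ex_RInt_cont_pos; try lra. intros x Hx.
    apply cont_mult_R. apply pdf_cont; auto.
    apply (Gt_cont_comp _ _ _ (phi rho r) x N). apply phi_cont; auto.
Qed.

Lemma O1_good Lc Ls rho r : 0 < Lc -> 0 < Ls -> 1 < rho -> 0 < r -> good (O1 Lc Ls rho r).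
Proof.
  intros Hc HL Hr Hr0. assert (N := q1_nice Ls rho r HL Hr Hr0).
  destruct (q1_bnd Ls rho r HL Hr Hr0) as [K B]. split.
  - intros x Hx. unfold O1. apply Rmult_le_pos; [apply pdf_nonneg; auto|].
    assert (Gt (q1 Ls rho r) (phi rho r x) <= Iinf (q1 Ls rho r)) by (eapply Gt_le_Iinf; eauto). lra.
  - intros a b Ha Hab. apply ex_RInt_cont_pos; try lra. intros x Hx.
    apply cont_mult_R. apply pdf_cont; auto.
    apply cont_minus_R. apply continuous_const.
    apply (Gt_cont_comp _ _ _ (phi rho r) x N). apply phi_cont; auto.
Qed.

Lemma mix_le x y th : 0 < x -> 0 < y -> 0 <= th <= 1 ->
  Rpower x (1 - th) * Rpower y th <= x + y.
Proof.
  intros Hx Hy Ht. set (M := Rmax x y).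
  assert (HM1 := Rmax_l x y). assert (HM2 := Rmax_r x y). fold M in HM1, HM2.
  assert (A : Rpower x (1 - th) <= Rpower M (1 - th)) by (apply rp_base_le; lra).
  assert (B : Rpower y th <= Rpower M th) by (apply rp_base_le; lra).
  assert (C : Rpower M (1 - th) * Rpower M th = M).
  { rewrite <- rp_plus. replace (1 - th + th) with 1 by ring. apply rp_one. lra. }
  assert (0 < Rpower x (1-th)) by apply rp_pos. assert (0 < Rpower y th) by apply rp_pos.
  assert (Rpower x (1 - th) * Rpower y th <= Rpower M (1 - th) * Rpower M th).
  { apply Rmult_le_compat; lra. }
  unfold M in *. destruct (Rle_dec x y); [rewrite Rmax_right in *|rewrite Rmax_left in *]; lra.
Qed.

Lemma phi_iff rho r h g : 1 < rho -> 0 < h ->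
  (g <= phi rho r h <-> rho * h * (rho * g + 1) <= TT rho r - 1).
Proof.
  intros Hr Hh. unfold phi. split; intro H.
  - apply Rmult_le_compat_r with (r := rho) in H; [|lra].
    replace (((TT rho r - 1) / (rho * h) - 1) / rho * rho) with ((TT rho r - 1) / (rho * h) - 1) in H by (field; lra).
    apply Rmult_le_compat_r with (r := rho * h) in H; [|nra].
    replace (((TT rho r - 1) / (rho * h) - 1) * (rho * h)) with (TT rho r - 1 - rho * h) in H by (field; nra).
    nra.
  - apply Rmult_le_reg_r with rho; [lra|].
    replace (((TT rho r - 1) / (rho * h) - 1) / rho * rho) with ((TT rho r - 1) / (rho * h) - 1) by (field; lra).
    apply Rmult_le_reg_r with (rho * h); [nra|].
    replace (((TT rho r - 1) / (rho * h) - 1) * (rho * h)) with (TT rho r - 1 - rho * h) by (field; nra).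
    nra.
Qed.

Lemma Gt_le_bound (q g : R -> R) c s t k K : nice q c s -> good g -> bnd g K ->
  (forall x, 0 < x -> x <= t -> q x <= k * g x) -> 0 <= k -> 0 <= K -> Gt q t <= k * K.
Proof.
  intros N Gg B H Hk HK. assert (G := nice_good q c s N).
  destruct (Rle_lt_dec t 0) as [h|h].
  - rewrite (Gt_neg q c s t N h). apply Rmult_le_pos; auto.
  - apply Iinf_le. apply (trunc_good q c s t N).
    assert (A : forall a b', 0 < a -> a < b' -> b' <= t -> RInt q a b' <= k * K).
    { intros a b' Ha H1 H2. apply Rle_trans with (RInt (fun x => k * g x) a b').
      - apply RInt_le; try lra. apply G; auto. apply ex_RInt_scal_R. apply Gg; auto.
        intros x Hx. apply H; lra.
      - rewrite RInt_scal_R by (apply Gg; auto). apply Rmult_le_compat_l; auto. }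
    intros a b Ha Hab.
    destruct (Rle_lt_dec b t) as [h1|h1].
    { destruct (trunc_le q t a b Ha Hab h1 (proj1 N)) as [_ ->]. apply A; lra. }
    destruct (Rle_lt_dec t a) as [h2|h2].
    { destruct (trunc_ge q t a b Ha Hab h2) as [_ ->]. apply Rmult_le_pos; auto. }
    destruct (trunc_mid q t a b Ha h2 h1 (proj1 N)) as [_ ->]. apply A; lra.
Qed.

Lemma U1 Lc Ls th : 0 < Lc -> 0 < Ls -> 0 <= th <= 1 -> 0 < Ls - 1 + th ->
  exists K, 0 <= K /\ forall rho r, 1 < rho -> 0 < r ->
    bnd (O1 Lc Ls rho r) (K * Rpower rho (- (th * r + 1 - th))).
Proof.
  intros Hc HL Ht Hs.
  destruct (gk_bnd (Ls + th - 1) Ls ltac:(lra) HL) as [J [HJ BJ]].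
  destruct (gk_bnd Lc Lc Hc Hc) as [Jc [HJc BJc]].
  assert (cs := cst_pos Ls HL). assert (cc := cst_pos Lc Hc).
  exists (cst Lc * (cst Ls * J * Jc)). split.
  { apply Rmult_le_pos; [lra|]. apply Rmult_le_pos; [|lra]. apply Rmult_le_pos; lra. }
  intros rho r Hr Hr0.
  set (E := Rpower rho (- (th * r + 1 - th))).
  assert (HE : 0 < E) by apply rp_pos.
  assert (N := q1_nice Ls rho r HL Hr Hr0).
  assert (T1 := TT_gt1 rho r Hr Hr0).
  assert (Pq : forall g, 0 < g -> q1 Ls rho r g <= (cst Ls * E) * gk (Ls + th - 1) Ls g).
  { intros g Hg. unfold q1. rewrite DdJ, pdf_eq by lra.
    assert (M := mix_le (rho * g) (TT rho r) th ltac:(nra) ltac:(lra) Ht).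
    assert (P1 : 0 < Rpower (rho * g) (1 - th) * Rpower (TT rho r) th).
    { apply Rmult_lt_0_compat; apply rp_pos. }
    assert (I1 : / (rho * g + TT rho r) <= / (Rpower (rho * g) (1 - th) * Rpower (TT rho r) th)).
    { apply Rinv_le_contravar; auto. }
    assert (EQ : gk Ls Ls g * / (Rpower (rho * g) (1 - th) * Rpower (TT rho r) th) = E * gk (Ls + th - 1) Ls g).
    { unfold E, gk, TT. rewrite rp_distr by lra. rewrite rp_mult.
      rewrite Rinv_mult. rewrite Rinv_mult.
      rewrite <- !rp_opp.
      replace (Ls + th - 1 - 1) with ((Ls - 1) + - (1 - th)) by ring. rewrite rp_plus.
      replace (- (th * r + 1 - th)) with (- (1 - th) + - (r * th)) by ring. rewrite rp_plus.
      ring. }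
    assert (0 < gk Ls Ls g) by apply gk_pos.
    rewrite Rmult_assoc. rewrite (Rmult_assoc (cst Ls) E). apply Rmult_le_compat_l; [lra|].
    rewrite <- EQ. apply Rmult_le_compat_l; lra. }
  assert (Iq : Iinf (q1 Ls rho r) <= (cst Ls * E) * J).
  { apply Iinf_le. apply (nice_good _ _ _ N).
    apply (bnd_le _ (gk (Ls + th - 1) Ls)); auto. apply (nice_good _ _ _ N). apply gk_good.
    apply Rmult_le_pos; lra. }
  replace (cst Lc * (cst Ls * J * Jc) * E) with (cst Lc * (cst Ls * E * J) * Jc) by ring.
  apply (bnd_le _ (gk Lc Lc)); auto.
  - apply O1_good; auto.
  - apply gk_good.
  - intros h Hh. unfold O1. rewrite pdf_eq by auto.
    destruct (q1_bnd Ls rho r HL Hr Hr0) as [K B].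
    assert (0 <= Gt (q1 Ls rho r) (phi rho r h)) by (apply (Gt_nonneg _ _ _ _ N)).
    assert (Gt (q1 Ls rho r) (phi rho r h) <= Iinf (q1 Ls rho r)) by (eapply Gt_le_Iinf; eauto).
    assert (0 < gk Lc Lc h) by apply gk_pos.
    assert (gk Lc Lc h * (Iinf (q1 Ls rho r) - Gt (q1 Ls rho r) (phi rho r h)) <= gk Lc Lc h * (cst Ls * E * J)).
    { apply Rmult_le_compat_l; lra. }
    rewrite Rmult_assoc. rewrite (Rmult_assoc (cst Lc)). apply Rmult_le_compat_l; lra.
  - apply Rmult_le_pos; [lra|]. apply Rmult_le_pos; [|lra]. apply Rmult_le_pos; lra.
Qed.

Lemma U2 Lc Ls ka la : 0 < Lc -> 0 < Ls -> 0 <= ka < Lc -> 0 <= la < Ls -> la <= 1 + ka ->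
  exists K, 0 <= K /\ forall rho r, 1 < rho -> 0 < r ->
    bnd (O2 Lc Ls rho r) (K * Rpower rho (ka * (r - 1) - la)).
Proof.
  intros Hc HL Hk Hl Hlk.
  destruct (gk_bnd (Ls - la) Ls ltac:(lra) HL) as [J [HJ BJ]].
  destruct (gk_bnd (Lc - ka) Lc ltac:(lra) Hc) as [Jc [HJc BJc]].
  assert (cs := cst_pos Ls HL). assert (cc := cst_pos Lc Hc).
  exists (cst Lc * cst Ls * J * Jc). split.
  { apply Rmult_le_pos; [|lra]. apply Rmult_le_pos; [|lra]. apply Rmult_le_pos; lra. }
  intros rho r Hr Hr0.
  set (E := Rpower rho (ka * (r - 1) - la)).
  assert (HE : 0 < E) by apply rp_pos.
  assert (N := q0_nice Ls rho HL Hr).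
  assert (T1 := TT_gt1 rho r Hr Hr0).
  assert (Pq : forall h g, 0 < h -> 0 < g -> g <= phi rho r h ->
            q0 Ls rho g <= (cst Ls * E * Rpower h (- ka)) * gk (Ls - la) Ls g).
  { intros h g Hh Hg Hgp. apply phi_iff in Hgp; auto.
    unfold q0. rewrite Dd0, pdf_eq by lra.
    set (u := rho * g + 1).
    assert (Hu1 : 1 <= u) by (unfold u; nra).
    assert (Hu2 : u <= TT rho r / (rho * h)).
    { apply Rmult_le_reg_r with (rho * h); [nra|].
      unfold Rdiv. rewrite Rmult_assoc, Rinv_l by nra. fold u in Hgp. nra. }
    assert (A1 : / u = Rpower u (- (1 + ka)) * Rpower u ka).
    { rewrite <- rp_plus. replace (- (1 + ka) + ka) with (Ropp 1) by ring.
      rewrite rp_opp, rp_one; auto; lra. }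
    assert (A2 : Rpower u (- (1 + ka)) <= Rpower (rho * g) (- la)).
    { apply Rle_trans with (Rpower u (- la)).
      - apply rp_exp_le; lra.
      - apply rp_base_le_neg; unfold u; nra. }
    assert (A3 : Rpower u ka <= Rpower (TT rho r / (rho * h)) ka) by (apply rp_base_le; lra).
    assert (A4 : Rpower (TT rho r / (rho * h)) ka = Rpower rho (r * ka) * Rpower rho (- ka) * Rpower h (- ka)).
    { unfold Rdiv. rewrite Rinv_mult. rewrite rp_distr.
      2:{ unfold TT; apply rp_pos. } 2:{ apply Rmult_lt_0_compat; apply Rinv_0_lt_compat; lra. }
      rewrite rp_distr by (apply Rinv_0_lt_compat; lra).
      rewrite !rp_inv_base by lra. rewrite <- !rp_opp. unfold TT. rewrite rp_mult. ring. }
    assert (A5 : Rpower (rho * g) (- la) = Rpower rho (- la) * Rpower g (- la)) by (apply rp_distr; lra).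
    assert (EQ : gk Ls Ls g * (Rpower (rho * g) (- la) * Rpower (TT rho r / (rho * h)) ka)
                 = E * Rpower h (- ka) * gk (Ls - la) Ls g).
    { rewrite A4, A5. unfold E, gk.
      replace (Ls - la - 1) with ((Ls - 1) + - la) by ring. rewrite rp_plus.
      replace (ka * (r - 1) - la) with (r * ka + - ka + - la) by ring. rewrite !rp_plus. ring. }
    assert (0 < gk Ls Ls g) by apply gk_pos.
    assert (0 < Rpower u ka) by apply rp_pos.
    assert (0 < Rpower u (- (1 + ka))) by apply rp_pos.
    assert (/ u <= Rpower (rho * g) (- la) * Rpower (TT rho r / (rho * h)) ka).
    { rewrite A1. apply Rmult_le_compat; lra. }
    replace (cst Ls * E * Rpower h (- ka) * gk (Ls - la) Ls g) with (cst Ls * (E * Rpower h (- ka) * gk (Ls - la) Ls g)) by ring.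
    rewrite <- EQ. rewrite Rmult_assoc. apply Rmult_le_compat_l; [lra|].
    apply Rmult_le_compat_l; lra. }
  replace (cst Lc * cst Ls * J * Jc * E) with ((cst Lc * (cst Ls * E * J)) * Jc) by ring.
  apply (bnd_le _ (gk (Lc - ka) Lc)); auto.
  - apply O2_good; auto.
  - apply gk_good.
  - intros h Hh. unfold O2. rewrite pdf_eq by auto.
    assert (G1 : Gt (q0 Ls rho) (phi rho r h) <= (cst Ls * E * Rpower h (- ka)) * J).
    { apply (Gt_le_bound _ (gk (Ls - la) Ls) _ _ _ _ _ N (gk_good _ _) BJ).
      - intros x Hx Hxp. apply Pq; auto.
      - assert (0 < Rpower h (- ka)) by apply rp_pos.
        apply Rmult_le_pos; [apply Rmult_le_pos|]; lra.
      - exact HJ. }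
    assert (EQ2 : gk Lc Lc h * Rpower h (- ka) = gk (Lc - ka) Lc h).
    { unfold gk. replace (Lc - ka - 1) with ((Lc - 1) + - ka) by ring. rewrite rp_plus. ring. }
    assert (0 < gk Lc Lc h) by apply gk_pos.
    assert (gk Lc Lc h * Gt (q0 Ls rho) (phi rho r h) <= gk Lc Lc h * (cst Ls * E * Rpower h (- ka) * J)).
    { apply Rmult_le_compat_l; lra. }
    replace (cst Lc * (cst Ls * E * J) * gk (Lc - ka) Lc h) with
      (cst Lc * (gk Lc Lc h * (cst Ls * E * Rpower h (- ka) * J))) by (rewrite <- EQ2; ring).
    rewrite Rmult_assoc. apply Rmult_le_compat_l; lra.
  - apply Rmult_le_pos; [lra|]. apply Rmult_le_pos; [|lra]. apply Rmult_le_pos; lra.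
Qed.

Lemma pdf_lower L y h : 0 < L -> 0 < y <= 1 -> y / 2 <= h <= y ->
  cst L * kk L * Rpower y (L - 1) * exp (- L) <= gamma_pdf L (/ L) h.
Proof.
  intros HL Hy Hh. rewrite pdf_eq by auto. unfold gk.
  assert (A := pow_half_lower L y h ltac:(lra) ltac:(lra) ltac:(lra)).
  assert (B : exp (- L) <= exp (- (L * h))) by (apply exp_mono; nra).
  assert (0 < cst L) by (apply cst_pos; auto). assert (0 < kk L) by apply kk_pos.
  assert (0 < Rpower y (L - 1)) by apply rp_pos. assert (0 < exp (- L)) by apply exp_pos.
  assert (0 < kk L * Rpower y (L - 1)) by nra.
  rewrite !Rmult_assoc. apply Rmult_le_compat_l; [lra|].
  rewrite <- Rmult_assoc. apply Rmult_le_compat; try nra.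
Qed.

Lemma q_lower Ls rho D x g : 0 < Ls -> 1 < rho -> 0 < D -> 0 < x <= 1 -> x / 2 <= g <= x ->
  cst Ls * kk Ls * Rpower x (Ls - 1) * exp (- Ls) * / (rho * x + D) <=
  gamma_pdf Ls (/ Ls) g * / (rho * g + D).
Proof.
  intros HL Hr HD Hx Hg.
  assert (A := pdf_lower Ls x g HL Hx Hg).
  assert (B : / (rho * x + D) <= / (rho * g + D)) by (apply Rinv_le_contravar; nra).
  assert (0 < / (rho * x + D)) by (apply Rinv_0_lt_compat; nra).
  assert (0 < cst Ls * kk Ls * Rpower x (Ls - 1) * exp (- Ls)).
  { assert (0 < cst Ls) by (apply cst_pos; auto). assert (0 < kk Ls) by apply kk_pos.
    assert (0 < Rpower x (Ls - 1)) by apply rp_pos. assert (0 < exp (- Ls)) by apply exp_pos.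
    repeat apply Rmult_lt_0_compat; auto. }
  apply Rmult_le_compat; lra.
Qed.

Definition cc1 Lc Ls := cst Lc * kk Lc * exp (- Lc) * (cst Ls * kk Ls * exp (- Ls)) / 4.

Lemma cc1_pos Lc Ls : 0 < Lc -> 0 < Ls -> 0 < cc1 Lc Ls.
Proof.
  intros. unfold cc1.
  assert (0 < cst Ls) by (apply cst_pos; auto). assert (0 < kk Ls) by apply kk_pos.
  assert (0 < cst Lc) by (apply cst_pos; auto). assert (0 < kk Lc) by apply kk_pos.
  assert (0 < exp (- Ls)) by apply exp_pos. assert (0 < exp (- Lc)) by apply exp_pos.
  unfold Rdiv. repeat apply Rmult_lt_0_compat; auto; lra.
Qed.

Lemma xpow x Ls : 0 < x -> Rpower x Ls = x * Rpower x (Ls - 1).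
Proof.
  intros. replace Ls with (1 + (Ls - 1)) at 1 by ring. rewrite rp_plus, rp_one; auto.
Qed.

Lemma RInt_q_lower (q : R -> R) Ls rho D x : 0 < Ls -> 1 < rho -> 0 < D -> 0 < x <= 1 ->
  (forall g, 0 < g -> q g = gamma_pdf Ls (/ Ls) g * / (rho * g + D)) -> good q ->
  cst Ls * kk Ls * Rpower x (Ls - 1) * exp (- Ls) * / (rho * x + D) * (x / 2) <= RInt q (x / 2) x.
Proof.
  intros HL Hr HD Hx E G.
  apply Rle_trans with (cst Ls * kk Ls * Rpower x (Ls - 1) * exp (- Ls) * / (rho * x + D) * (x - x / 2)).
  { right. f_equal. field. }
  apply RInt_lower; try lra. apply G; lra.
  intros g Hg. rewrite E by lra. apply q_lower; auto; lra.
Qed.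

Lemma LB1 Lc Ls rho r x : 0 < Lc -> 0 < Ls -> 1 < rho -> 0 < r -> 0 < x <= 1 ->
  4 * TT rho r <= rho * rho * x ->
  cc1 Lc Ls * Rpower x Ls / (rho * x + TT rho r) <= Iinf (O1 Lc Ls rho r).
Proof.
  intros Hc HL Hr Hr0 Hx Hcond.
  assert (T1 := TT_gt1 rho r Hr Hr0).
  destruct (U1 Lc Ls 1 Hc HL ltac:(lra) ltac:(lra)) as [K [HK BK]].
  specialize (BK rho r Hr Hr0).
  assert (G := O1_good Lc Ls rho r Hc HL Hr Hr0).
  assert (N := q1_nice Ls rho r HL Hr Hr0).
  destruct (q1_bnd Ls rho r HL Hr Hr0) as [Kq Bq].
  set (A := cst Lc * kk Lc * Rpower 1 (Lc - 1) * exp (- Lc)).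
  set (B := cst Ls * kk Ls * Rpower x (Ls - 1) * exp (- Ls) * / (rho * x + TT rho r) * (x / 2)).
  assert (HA : 0 < A).
  { unfold A. assert (0 < cst Lc) by (apply cst_pos; auto). assert (0 < kk Lc) by apply kk_pos.
    assert (0 < Rpower 1 (Lc - 1)) by apply rp_pos. assert (0 < exp (- Lc)) by apply exp_pos.
    repeat apply Rmult_lt_0_compat; auto. }
  assert (HB : 0 <= B).
  { unfold B. assert (0 < cst Ls) by (apply cst_pos; auto). assert (0 < kk Ls) by apply kk_pos.
    assert (0 < Rpower x (Ls - 1)) by apply rp_pos. assert (0 < exp (- Ls)) by apply exp_pos.
    assert (0 < / (rho * x + TT rho r)) by (apply Rinv_0_lt_compat; nra).
    left; repeat apply Rmult_lt_0_compat; auto; lra. }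
  assert (PB : forall h, 1 / 2 <= h <= 1 -> A * B <= O1 Lc Ls rho r h).
  { intros h Hh. unfold O1.
    assert (Hphi : phi rho r h <= x / 2).
    { unfold phi.
      assert (H1 : (TT rho r - 1) / (rho * h) <= 2 * TT rho r / rho).
      { apply Rmult_le_reg_r with (rho * h); [nra|].
        replace ((TT rho r - 1) / (rho * h) * (rho * h)) with (TT rho r - 1) by (field; nra).
        replace (2 * TT rho r / rho * (rho * h)) with (2 * TT rho r * h) by (field; lra). nra. }
      apply Rmult_le_reg_r with rho; [lra|].
      replace (((TT rho r - 1) / (rho * h) - 1) / rho * rho) with ((TT rho r - 1) / (rho * h) - 1) by (field; lra).
      assert (2 * TT rho r / rho <= x / 2 * rho).
      { apply Rmult_le_reg_r with rho; [lra|].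
        replace (2 * TT rho r / rho * rho) with (2 * TT rho r) by (field; lra). nra. }
      lra. }
    assert (V1 : RInt (q1 Ls rho r) (x / 2) x <= Iinf (q1 Ls rho r) - Gt (q1 Ls rho r) (phi rho r h)).
    { apply (Iinf_minus_Gt _ _ _ _ _ _ Kq N Bq); lra. }
    assert (V2 : B <= RInt (q1 Ls rho r) (x / 2) x).
    { unfold B. apply RInt_q_lower; auto; try lra.
      - intros g Hg. unfold q1. rewrite DdJ by lra. auto.
      - apply (nice_good _ _ _ N). }
    assert (V3 : A <= gamma_pdf Lc (/ Lc) h) by (apply pdf_lower; lra).
    apply Rmult_le_compat; lra. }
  apply Rle_trans with (RInt (O1 Lc Ls rho r) (1 / 2) 1).
  2:{ apply (Iinf_ge _ _ _ _ G BK); lra. }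
  apply Rle_trans with ((A * B) * (1 - 1 / 2)).
  2:{ apply RInt_lower; try lra. apply G; lra. intros h Hh. apply PB; lra. }
  unfold A, B, cc1. rewrite rp_1. rewrite (xpow x Ls) by lra.
  right. field. nra.
Qed.

Lemma LB2 Lc Ls rho r x y : 0 < Lc -> 0 < Ls -> 1 < rho -> 0 < r -> 0 < x <= 1 -> 0 < y <= 1 ->
  rho * y * (rho * x + 1) <= TT rho r - 1 ->
  cc1 Lc Ls * Rpower x Ls * Rpower y Lc / (rho * x + 1) <= Iinf (O2 Lc Ls rho r).
Proof.
  intros Hc HL Hr Hr0 Hx Hy Hcond.
  assert (T1 := TT_gt1 rho r Hr Hr0).
  destruct (U2 Lc Ls 0 0 Hc HL ltac:(lra) ltac:(lra) ltac:(lra)) as [K [HK BK]].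
  specialize (BK rho r Hr Hr0).
  assert (G := O2_good Lc Ls rho r Hc HL Hr Hr0).
  assert (N := q0_nice Ls rho HL Hr).
  set (A := cst Lc * kk Lc * Rpower y (Lc - 1) * exp (- Lc)).
  set (B := cst Ls * kk Ls * Rpower x (Ls - 1) * exp (- Ls) * / (rho * x + 1) * (x / 2)).
  assert (HA : 0 < A).
  { unfold A. assert (0 < cst Lc) by (apply cst_pos; auto). assert (0 < kk Lc) by apply kk_pos.
    assert (0 < Rpower y (Lc - 1)) by apply rp_pos. assert (0 < exp (- Lc)) by apply exp_pos.
    repeat apply Rmult_lt_0_compat; auto. }
  assert (HB : 0 <= B).
  { unfold B. assert (0 < cst Ls) by (apply cst_pos; auto). assert (0 < kk Ls) by apply kk_pos.
    assert (0 < Rpower x (Ls - 1)) by apply rp_pos. assert (0 < exp (- Ls)) by apply exp_pos.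
    assert (0 < / (rho * x + 1)) by (apply Rinv_0_lt_compat; nra).
    left; repeat apply Rmult_lt_0_compat; auto; lra. }
  assert (PB : forall h, y / 2 <= h <= y -> A * B <= O2 Lc Ls rho r h).
  { intros h Hh. unfold O2.
    assert (Hphi : x <= phi rho r h).
    { apply phi_iff; try lra. nra. }
    assert (V1 : RInt (q0 Ls rho) (x / 2) (phi rho r h) <= Gt (q0 Ls rho) (phi rho r h)).
    { apply (Gt_ge _ _ _ _ _ N); lra. }
    assert (V1' : RInt (q0 Ls rho) (x / 2) x <= RInt (q0 Ls rho) (x / 2) (phi rho r h)).
    { apply good_mono; [apply (nice_good _ _ _ N)|lra..]. }
    assert (V2 : B <= RInt (q0 Ls rho) (x / 2) x).
    { unfold B. apply RInt_q_lower; auto; try lra.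
      - intros g Hg. unfold q0. rewrite Dd0. auto.
      - apply (nice_good _ _ _ N). }
    assert (V3 : A <= gamma_pdf Lc (/ Lc) h) by (apply pdf_lower; lra).
    apply Rmult_le_compat; lra. }
  apply Rle_trans with (RInt (O2 Lc Ls rho r) (y / 2) y).
  2:{ apply (Iinf_ge _ _ _ _ G BK); lra. }
  apply Rle_trans with ((A * B) * (y - y / 2)).
  2:{ apply RInt_lower; try lra. apply G; lra. intros h Hh. apply PB; lra. }
  unfold A, B, cc1. rewrite (xpow x Ls) by lra. rewrite (xpow y Lc) by lra.
  right. field. nra.
Qed.

Lemma ln_rp rho e : 0 < rho -> ln (Rpower rho e) = e * ln rho.
Proof. intros. unfold Rpower. rewrite ln_exp. auto. Qed.

Lemma lim_from_bounds (F : R -> R) e :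
  (exists c rho0, 0 < c /\ forall rho, rho0 < rho -> c * Rpower rho (- e) <= F rho) ->
  (forall d, 0 < d -> exists C rho1, 0 < C /\ forall rho, rho1 < rho -> F rho <= C * Rpower rho (- (e - d))) ->
  lim_infty (fun rho => - ln (F rho) / ln rho) e.
Proof.
  intros [c [r0 [Hc Lw]]] Up eps Heps.
  destruct (Up (eps / 2) ltac:(lra)) as [C [r1 [HC Upb]]].
  set (B := 2 * (Rabs (ln c) + Rabs (ln C) + 1) / eps).
  assert (HB : 0 < B).
  { unfold B. apply Rdiv_lt_0_compat; auto.
    assert (0 <= Rabs (ln c)) by apply Rabs_pos. assert (0 <= Rabs (ln C)) by apply Rabs_pos. lra. }
  exists (Rmax (Rmax r0 r1) (Rmax 1 (exp B))). intros rho Hrho.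
  assert (X1 := Rmax_l (Rmax r0 r1) (Rmax 1 (exp B))). assert (X2 := Rmax_r (Rmax r0 r1) (Rmax 1 (exp B))).
  assert (X3 := Rmax_l r0 r1). assert (X4 := Rmax_r r0 r1).
  assert (X5 := Rmax_l 1 (exp B)). assert (X6 := Rmax_r 1 (exp B)).
  assert (Hr : 1 < rho) by lra.
  assert (Hl : B < ln rho).
  { rewrite <- (ln_exp B). apply ln_increasing; [apply exp_pos|lra]. }
  specialize (Lw rho ltac:(lra)). specialize (Upb rho ltac:(lra)).
  assert (P1 : 0 < c * Rpower rho (- e)) by (apply Rmult_lt_0_compat; auto; apply rp_pos).
  assert (Fp : 0 < F rho) by lra.
  assert (A1' : ln c - e * ln rho <= ln (F rho)).
  { assert (H := ln_le _ _ P1 Lw). rewrite ln_mult, ln_rp in H; auto; try lra. apply rp_pos. }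
  assert (A2 : ln (F rho) <= ln C - (e - eps / 2) * ln rho).
  { replace (ln C - (e - eps / 2) * ln rho) with (ln (C * Rpower rho (- (e - eps / 2)))).
    - apply ln_le; auto.
    - rewrite ln_mult; auto; [|apply rp_pos]. rewrite ln_rp by lra. ring. }
  assert (Hlp : 0 < ln rho) by lra.
  assert (Q1 : Rabs (ln c) < eps / 2 * ln rho).
  { assert (B * eps = 2 * (Rabs (ln c) + Rabs (ln C) + 1)) by (unfold B; field; lra).
    assert (0 <= Rabs (ln C)) by apply Rabs_pos. nra. }
  assert (Q2 : Rabs (ln C) < eps / 2 * ln rho).
  { assert (B * eps = 2 * (Rabs (ln c) + Rabs (ln C) + 1)) by (unfold B; field; lra).
    assert (0 <= Rabs (ln c)) by apply Rabs_pos. nra. }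
  assert (R1 := Rle_abs (ln c)). assert (R2 := Rabs_maj2 (ln c)).
  assert (R3 := Rle_abs (ln C)). assert (R4 := Rabs_maj2 (ln C)).
  apply Rabs_def1.
  - apply Rmult_lt_reg_r with (ln rho); auto.
    replace ((- ln (F rho) / ln rho - e) * ln rho) with (- ln (F rho) - e * ln rho) by (field; lra).
    nra.
  - apply Rmult_lt_reg_r with (ln rho); auto.
    replace ((- ln (F rho) / ln rho - e) * ln rho) with (- ln (F rho) - e * ln rho) by (field; lra).
    nra.
Qed.

Lemma rp_ge1 rho a : 1 <= rho -> 0 <= a -> 1 <= Rpower rho a.
Proof. intros. rewrite <- (rp_1 a). apply rp_base_le; lra. Qed.

Lemma rp_le1 rho a : 1 <= rho -> a <= 0 -> Rpower rho a <= 1.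
Proof. intros. rewrite <- (rp_zero rho) by lra. apply rp_exp_le; lra. Qed.

Lemma big_rho (k a : R) : 0 < a -> 0 < k -> exists r0, 1 <= r0 /\ forall rho, r0 < rho -> k < Rpower rho a.
Proof.
  intros Ha Hk. exists (Rmax 1 (Rpower k (/ a))). split; [apply Rmax_l|].
  intros rho Hr. assert (X1 := Rmax_l 1 (Rpower k (/ a))). assert (X2 := Rmax_r 1 (Rpower k (/ a))).
  assert (Rpower (Rpower k (/ a)) a < Rpower rho a) by (apply rp_base_lt; try apply rp_pos; lra).
  rewrite rp_mult in H. replace (/ a * a) with 1 in H by (field; lra). rewrite rp_one in H; auto.
Qed.

Lemma L1gen Lc Ls r be : 0 < Lc -> 0 < Ls -> 0 < r -> 0 <= be <= 1 -> 0 < 2 - be - r ->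
  exists r0, 1 <= r0 /\ forall rho, r0 < rho ->
    cc1 Lc Ls / 2 * Rpower rho (- (Ls * be + Rmax (1 - be) r)) <= Iinf (O1 Lc Ls rho r).
Proof.
  intros Hc HL Hr Hb Hg.
  destruct (big_rho 4 (2 - be - r) Hg ltac:(lra)) as [r0 [Hr0 P]].
  exists r0. split; auto. intros rho Hrho. specialize (P rho Hrho).
  assert (H1 : 1 < rho) by lra.
  set (x := Rpower rho (- be)).
  assert (Hx : 0 < x <= 1) by (split; [apply rp_pos| apply rp_le1; lra]).
  assert (Cond : 4 * TT rho r <= rho * rho * x).
  { unfold x, TT. replace (rho * rho * Rpower rho (- be)) with (Rpower rho (2 - be - r) * Rpower rho r).
    - assert (0 < Rpower rho r) by apply rp_pos. nra.
    - rewrite <- rp_plus. replace (2 - be - r + r) with (1 + 1 + - be) by ring.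
      rewrite !rp_plus, rp_one by lra. ring. }
  apply Rle_trans with (cc1 Lc Ls * Rpower x Ls / (rho * x + TT rho r)); [|apply LB1; auto].
  set (M := Rmax (1 - be) r).
  assert (D : rho * x + TT rho r <= 2 * Rpower rho M).
  { unfold x, TT. replace (rho * Rpower rho (- be)) with (Rpower rho (1 - be)).
    2:{ replace (1 - be) with (1 + - be) by ring. rewrite rp_plus, rp_one; lra. }
    assert (Rpower rho (1 - be) <= Rpower rho M) by (apply rp_exp_le; [lra|apply Rmax_l]).
    assert (Rpower rho r <= Rpower rho M) by (apply rp_exp_le; [lra|apply Rmax_r]). lra. }
  assert (Hxp : Rpower x Ls = Rpower rho (- (Ls * be))).
  { unfold x. rewrite rp_mult. f_equal. ring. }
  assert (HM : 0 < Rpower rho M) by apply rp_pos.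
  assert (Hc1 := cc1_pos Lc Ls Hc HL).
  assert (HD : 0 < rho * x + TT rho r) by (unfold TT; assert (0 < Rpower rho r) by apply rp_pos; nra).
  rewrite Hxp. replace (- (Ls * be + M)) with (- (Ls * be) + - M) by ring.
  rewrite rp_plus, (rp_opp rho M).
  assert (0 < Rpower rho (- (Ls * be))) by apply rp_pos.
  unfold Rdiv.
  replace (cc1 Lc Ls * / 2 * (Rpower rho (- (Ls * be)) * / Rpower rho M))
    with (cc1 Lc Ls * Rpower rho (- (Ls * be)) * / (2 * Rpower rho M)) by (field; lra).
  apply Rmult_le_compat_l; [nra|]. apply Rinv_le_contravar; auto.
Qed.

Lemma L2gen Lc Ls r be al : 0 < Lc -> 0 < Ls -> 0 < r -> 0 <= be <= 1 -> 0 <= al ->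
  2 - al - be <= r ->
  exists r0, 1 <= r0 /\ forall rho, r0 < rho ->
    cc1 Lc Ls * Rpower 4 (- Lc) / 2 * Rpower rho (- (Ls * be + Lc * al + (1 - be))) <= Iinf (O2 Lc Ls rho r).
Proof.
  intros Hc HL Hr Hb Ha Hg.
  destruct (big_rho 2 r Hr ltac:(lra)) as [r0 [Hr0 P]].
  exists r0. split; auto. intros rho Hrho. specialize (P rho Hrho).
  assert (H1 : 1 < rho) by lra.
  set (x := Rpower rho (- be)).
  set (y := Rpower rho (- al) / 4).
  assert (Hx : 0 < x <= 1) by (split; [apply rp_pos| apply rp_le1; lra]).
  assert (Hy : 0 < y <= 1).
  { unfold y. assert (0 < Rpower rho (- al)) by apply rp_pos.
    assert (Rpower rho (- al) <= 1) by (apply rp_le1; lra). lra. }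
  assert (E1 : rho * x = Rpower rho (1 - be)).
  { unfold x. replace (1 - be) with (1 + - be) by ring. rewrite rp_plus, rp_one; lra. }
  assert (G1 : 1 <= rho * x) by (rewrite E1; apply rp_ge1; lra).
  assert (D : rho * x + 1 <= 2 * Rpower rho (1 - be)) by (rewrite <- E1; lra).
  assert (Cond : rho * y * (rho * x + 1) <= TT rho r - 1).
  { assert (A : rho * y * (2 * Rpower rho (1 - be)) = Rpower rho (2 - al - be) / 2).
    { unfold y. replace (2 - al - be) with (1 + - al + (1 - be)) by ring.
      rewrite !rp_plus, rp_one by lra. field. }
    assert (B : Rpower rho (2 - al - be) <= Rpower rho r) by (apply rp_exp_le; lra).
    assert (0 < rho * y) by (apply Rmult_lt_0_compat; lra).
    assert (rho * y * (rho * x + 1) <= rho * y * (2 * Rpower rho (1 - be))) by (apply Rmult_le_compat_l; lra).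
    unfold TT. lra. }
  apply Rle_trans with (cc1 Lc Ls * Rpower x Ls * Rpower y Lc / (rho * x + 1)); [|apply LB2; auto].
  assert (Hxp : Rpower x Ls = Rpower rho (- (Ls * be))).
  { unfold x. rewrite rp_mult. f_equal. ring. }
  assert (Hyp : Rpower y Lc = Rpower rho (- (Lc * al)) * Rpower 4 (- Lc)).
  { unfold y. unfold Rdiv. rewrite rp_distr by (try apply rp_pos; lra).
    rewrite rp_mult, rp_inv_base, <- rp_opp by lra. f_equal. f_equal. ring. }
  rewrite Hxp, Hyp.
  replace (- (Ls * be + Lc * al + (1 - be))) with (- (Ls * be) + - (Lc * al) + - (1 - be)) by ring.
  rewrite !rp_plus, (rp_opp rho (1 - be)).
  assert (Hc1 := cc1_pos Lc Ls Hc HL).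
  assert (0 < Rpower rho (- (Ls * be))) by apply rp_pos.
  assert (0 < Rpower rho (- (Lc * al))) by apply rp_pos.
  assert (0 < Rpower 4 (- Lc)) by apply rp_pos.
  assert (0 < Rpower rho (1 - be)) by apply rp_pos.
  unfold Rdiv.
  replace (cc1 Lc Ls * Rpower 4 (- Lc) * / 2 * (Rpower rho (- (Ls * be)) * Rpower rho (- (Lc * al)) * / Rpower rho (1 - be)))
    with (cc1 Lc Ls * Rpower rho (- (Ls * be)) * (Rpower rho (- (Lc * al)) * Rpower 4 (- Lc)) * / (2 * Rpower rho (1 - be))) by (field; lra).
  apply Rmult_le_compat_l.
  { apply Rmult_le_pos; [|apply Rmult_le_pos]; nra. }
  apply Rinv_le_contravar; [lra|auto].
Qed.

Definition e1 Ls r := if Rlt_dec r 1 then r + (1 - r) * Rmin 1 Ls else r.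
Definition e2 Lc Ls r := if Rlt_dec r 1 then Lc * (1 - r) + Rmin Ls (1 + Lc)
   else if Rle_dec Ls 1 then Ls else 1 + Rmin (Ls - 1) Lc * Rmax (2 - r) 0.
Definition ee Lc Ls r := Rmin (e1 Ls r) (e2 Lc Ls r).

Lemma O1_nonneg Lc Ls rho r : 0 < Lc -> 0 < Ls -> 1 < rho -> 0 < r -> 0 <= Iinf (O1 Lc Ls rho r).
Proof.
  intros. destruct (U1 Lc Ls 1 H H0 ltac:(lra) ltac:(lra)) as [K [_ B]].
  apply (Iinf_nonneg _ _ (O1_good Lc Ls rho r H H0 H1 H2) (B rho r H1 H2)).
Qed.

Lemma O2_nonneg Lc Ls rho r : 0 < Lc -> 0 < Ls -> 1 < rho -> 0 < r -> 0 <= Iinf (O2 Lc Ls rho r).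
Proof.
  intros. destruct (U2 Lc Ls 0 0 H H0 ltac:(lra) ltac:(lra) ltac:(lra)) as [K [_ B]].
  apply (Iinf_nonneg _ _ (O2_good Lc Ls rho r H H0 H1 H2) (B rho r H1 H2)).
Qed.

Definition EDf Lc Ls r rho := EDj Lc Ls rho (r / 2 * log2 rho).

Lemma lower_bound Lc Ls r : 0 < Lc -> 0 < Ls -> 0 < r ->
  exists c rho0, 0 < c /\ forall rho, rho0 < rho -> c * Rpower rho (- ee Lc Ls r) <= EDf Lc Ls r rho.
Proof.
  intros Hc HL Hr.
  assert (K1 : forall be E, 0 <= be <= 1 -> 0 < 2 - be - r -> Ls * be + Rmax (1 - be) r = E -> E = ee Lc Ls r ->
            exists c rho0, 0 < c /\ forall rho, rho0 < rho -> c * Rpower rho (- ee Lc Ls r) <= EDf Lc Ls r rho).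
  { intros be E Hb Hg HE HE'. destruct (L1gen Lc Ls r be Hc HL Hr Hb Hg) as [r0 [Hr0 P]].
    exists (cc1 Lc Ls / 2), r0. split; [assert (X := cc1_pos Lc Ls Hc HL); lra|].
    intros rho Hrho. unfold EDf. rewrite ED_eq by lra.
    assert (X := O2_nonneg Lc Ls rho r Hc HL ltac:(lra) Hr). specialize (P rho Hrho).
    rewrite HE, HE' in P. lra. }
  assert (K2 : forall be al E, 0 <= be <= 1 -> 0 <= al -> 2 - al - be <= r -> Ls * be + Lc * al + (1 - be) = E -> E = ee Lc Ls r ->
            exists c rho0, 0 < c /\ forall rho, rho0 < rho -> c * Rpower rho (- ee Lc Ls r) <= EDf Lc Ls r rho).
  { intros be al E Hb Ha Hg HE HE'. destruct (L2gen Lc Ls r be al Hc HL Hr Hb Ha Hg) as [r0 [Hr0 P]].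
    exists (cc1 Lc Ls * Rpower 4 (- Lc) / 2), r0. split.
    { assert (X := cc1_pos Lc Ls Hc HL). assert (0 < Rpower 4 (- Lc)) by apply rp_pos.
      apply Rdiv_lt_0_compat; [nra|lra]. }
    intros rho Hrho. unfold EDf. rewrite ED_eq by lra.
    assert (X := O1_nonneg Lc Ls rho r Hc HL ltac:(lra) Hr). specialize (P rho Hrho).
    rewrite HE, HE' in P. lra. }
  Ltac dd := unfold ee, e1, e2;
    repeat match goal with
    | |- context [Rlt_dec ?a ?b] => destruct (Rlt_dec a b); try lra
    | |- context [Rle_dec ?a ?b] => destruct (Rle_dec a b); try lra
    end.
  destruct (Rle_lt_dec (e2 Lc Ls r) (e1 Ls r)) as [Hle|Hlt].
  -
    unfold e1, e2 in Hle.
    destruct (Rlt_dec r 1) as [r1|r1].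
    + destruct (Rle_lt_dec Ls (1 + Lc)) as [h|h].
      * rewrite (Rmin_left Ls) in Hle by lra.
        apply (K2 1 (1 - r) (Lc * (1 - r) + Ls)); try lra. dd.
        rewrite (Rmin_left Ls) by lra. rewrite Rmin_right by lra. auto.
      * rewrite (Rmin_right Ls) in Hle by lra.
        apply (K2 0 (2 - r) (Lc * (1 - r) + (1 + Lc))); try lra. dd.
        rewrite (Rmin_right Ls) by lra. rewrite Rmin_right by lra. auto.
    + destruct (Rle_dec Ls 1) as [h|h].
      * apply (K2 1 0 Ls); try lra. dd. rewrite Rmin_right by lra. auto.
      * destruct (Rle_lt_dec 2 r) as [h2|h2].
        -- rewrite (Rmax_right (2 - r)) in Hle by lra.
           apply (K2 0 0 1); try lra. dd. rewrite (Rmax_right (2 - r)) by lra.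
           rewrite Rmin_right by lra. ring.
        -- rewrite (Rmax_left (2 - r)) in Hle by lra.
           destruct (Rle_lt_dec (Ls - 1) Lc) as [h3|h3].
           ++ rewrite (Rmin_left (Ls - 1)) in Hle by lra.
              apply (K2 (2 - r) 0 (1 + (Ls - 1) * (2 - r))); try lra. dd.
              rewrite (Rmax_left (2 - r)) by lra. rewrite (Rmin_left (Ls - 1)) by lra.
              rewrite Rmin_right by lra. ring.
           ++ rewrite (Rmin_right (Ls - 1)) in Hle by lra.
              apply (K2 0 (2 - r) (1 + Lc * (2 - r))); try lra. dd.
              rewrite (Rmax_left (2 - r)) by lra. rewrite (Rmin_right (Ls - 1)) by lra.
              rewrite Rmin_right by lra. ring.
  -
    unfold e1, e2 in Hlt.
    destruct (Rlt_dec r 1) as [r1|r1].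
    + destruct (Rle_lt_dec 1 Ls) as [h|h].
      * rewrite (Rmin_left 1) in Hlt by lra.
        apply (K1 0 1); try lra. rewrite Rmax_left by lra. ring.
        dd. rewrite (Rmin_left 1) by lra. rewrite Rmin_left by lra. ring.
      * rewrite (Rmin_right 1) in Hlt by lra.
        apply (K1 (1 - r) (r + (1 - r) * Ls)); try lra. rewrite Rmax_left by lra. ring.
        dd. rewrite (Rmin_right 1) by lra. rewrite Rmin_left by lra. auto.
    + assert (r < 2).
      { destruct (Rle_dec Ls 1) as [h|h]; [lra|].
        destruct (Rle_lt_dec 2 r) as [h2|h2]; auto.
        rewrite Rmax_right in Hlt by lra. lra. }
      apply (K1 0 r); try lra. rewrite Rmax_right by lra. ring.
      dd; rewrite Rmin_left by lra; auto.
Qed.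

Lemma th_exists Ls r d : 0 < Ls -> 0 < r -> 0 < d ->
  exists th, 0 <= th <= 1 /\ 0 < Ls - 1 + th /\ e1 Ls r - d <= th * r + 1 - th.
Proof.
  intros HL Hr Hd. unfold e1. destruct (Rlt_dec r 1) as [r1|r1].
  - set (m := Rmin 1 Ls). assert (M1 := Rmin_l 1 Ls). assert (M2 := Rmin_r 1 Ls).
    assert (Hm : 0 < m) by (unfold m; apply Rmin_glb_lt; lra). fold m in M1, M2.
    set (eta := Rmin d m / 2). assert (E1 := Rmin_l d m). assert (E2 := Rmin_r d m).
    assert (He : 0 < eta) by (unfold eta; assert (0 < Rmin d m) by (apply Rmin_glb_lt; lra); lra).
    assert (eta <= d / 2) by (unfold eta; lra). assert (eta <= m / 2) by (unfold eta; lra).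
    exists (1 - m + eta). split; [lra|]. split.
    + unfold m. destruct (Rle_dec 1 Ls); [rewrite Rmin_left by lra|rewrite Rmin_right by lra]; lra.
    + assert (eta * (1 - r) <= d) by nra. nra.
  - exists 1. split; [lra|]. split; lra.
Qed.

Lemma kl_exists Lc Ls r d : 0 < Lc -> 0 < Ls -> 0 < r -> 0 < d ->
  exists ka la, 0 <= ka < Lc /\ 0 <= la < Ls /\ la <= 1 + ka /\ e2 Lc Ls r - d <= la - ka * (r - 1).
Proof.
  intros Hc HL Hr Hd. unfold e2. destruct (Rlt_dec r 1) as [r1|r1].
  - set (eta := Rmin (d / 2) (Rmin (Lc / 2) (Ls / 2)) / 2).
    assert (A1 := Rmin_l (d / 2) (Rmin (Lc / 2) (Ls / 2))).
    assert (A2 := Rmin_r (d / 2) (Rmin (Lc / 2) (Ls / 2))).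
    assert (A3 := Rmin_l (Lc / 2) (Ls / 2)). assert (A4 := Rmin_r (Lc / 2) (Ls / 2)).
    assert (A5 : 0 < Rmin (d / 2) (Rmin (Lc / 2) (Ls / 2))).
    { apply Rmin_glb_lt; [lra|apply Rmin_glb_lt; lra]. }
    assert (B1 := Rmin_l Ls (1 + Lc)). assert (B2 := Rmin_r Ls (1 + Lc)).
    assert (B3 : Rmin Ls (1 + Lc) = Ls \/ Rmin Ls (1 + Lc) = 1 + Lc).
    { unfold Rmin. destruct Rle_dec; auto. }
    exists (Lc - eta), (Rmin Ls (1 + Lc) - eta).
    unfold eta in *. split; [lra|]. split; [split; destruct B3; lra|]. split; [lra|].
    nra.
  - destruct (Rle_dec Ls 1) as [h|h].
    + exists 0, (Ls - Rmin d Ls / 2).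
      assert (A1 := Rmin_l d Ls). assert (A2 := Rmin_r d Ls).
      assert (0 < Rmin d Ls) by (apply Rmin_glb_lt; lra).
      split; [lra|]. split; [lra|]. split; lra.
    + destruct (Rle_lt_dec 2 r) as [h2|h2].
      * exists 0, 1. rewrite Rmax_right by lra. split; [lra|]. split; [lra|]. split; lra.
      * rewrite Rmax_left by lra.
        set (k := Rmin (Ls - 1) Lc). assert (K1 := Rmin_l (Ls - 1) Lc). assert (K2 := Rmin_r (Ls - 1) Lc).
        assert (Hk : 0 < k) by (unfold k; apply Rmin_glb_lt; lra). fold k in K1, K2.
        set (eta := Rmin d k / 2). assert (E1 := Rmin_l d k). assert (E2 := Rmin_r d k).
        assert (0 < Rmin d k) by (apply Rmin_glb_lt; lra).
        exists (k - eta), (1 + (k - eta)). unfold eta in *.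
        split; [lra|]. split; [lra|]. split; [lra|]. nra.
Qed.

Lemma upper_bound Lc Ls r : 0 < Lc -> 0 < Ls -> 0 < r ->
  forall d, 0 < d -> exists C rho1, 0 < C /\ forall rho, rho1 < rho ->
    EDf Lc Ls r rho <= C * Rpower rho (- (ee Lc Ls r - d)).
Proof.
  intros Hc HL Hr d Hd.
  destruct (th_exists Ls r d HL Hr Hd) as [th [Ht [Ht2 Ht3]]].
  destruct (kl_exists Lc Ls r d Hc HL Hr Hd) as [ka [la [Hk [Hl [Hkl Hb]]]]].
  destruct (U1 Lc Ls th Hc HL Ht Ht2) as [K1 [HK1 B1]].
  destruct (U2 Lc Ls ka la Hc HL Hk Hl Hkl) as [K2 [HK2 B2]].
  exists (K1 + K2 + 1), 1. split; [lra|]. intros rho Hrho.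
  unfold EDf. rewrite ED_eq by lra.
  assert (I1 := Iinf_le _ _ (O1_good Lc Ls rho r Hc HL Hrho Hr) (B1 rho r Hrho Hr)).
  assert (I2 := Iinf_le _ _ (O2_good Lc Ls rho r Hc HL Hrho Hr) (B2 rho r Hrho Hr)).
  assert (M1 := Rmin_l (e1 Ls r) (e2 Lc Ls r)). assert (M2 := Rmin_r (e1 Ls r) (e2 Lc Ls r)).
  fold (ee Lc Ls r) in M1, M2.
  assert (P1 : Rpower rho (- (th * r + 1 - th)) <= Rpower rho (- (ee Lc Ls r - d))) by (apply rp_exp_le; lra).
  assert (P2 : Rpower rho (ka * (r - 1) - la) <= Rpower rho (- (ee Lc Ls r - d))) by (apply rp_exp_le; lra).
  assert (0 < Rpower rho (- (ee Lc Ls r - d))) by apply rp_pos.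
  assert (K1 * Rpower rho (- (th * r + 1 - th)) <= K1 * Rpower rho (- (ee Lc Ls r - d))) by (apply Rmult_le_compat_l; lra).
  assert (K2 * Rpower rho (ka * (r - 1) - la) <= K2 * Rpower rho (- (ee Lc Ls r - d))) by (apply Rmult_le_compat_l; lra).
  nra.
Qed.

Lemma lim_ee Lc Ls r : 0 < Lc -> 0 < Ls -> 0 < r -> lim_infty (exponent_fun Lc Ls r) (ee Lc Ls r).
Proof.
  intros Hc HL Hr. unfold exponent_fun.
  apply (lim_from_bounds (EDf Lc Ls r)).
  - apply lower_bound; auto.
  - apply upper_bound; auto.
Qed.

Lemma lim_infty_unique f d d' : lim_infty f d -> lim_infty f d' -> d = d'.
Proof.
  intros H1 H2. apply Rminus_diag_uniq. apply Rabs_eq_0.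
  destruct (Rle_lt_dec (Rabs (d - d')) 0) as [h|h].
  { apply Rle_antisym; [exact h|apply Rabs_pos]. }
  exfalso. set (e := Rabs (d - d') / 3).
  destruct (H1 e ltac:(unfold e; lra)) as [M1 P1].
  destruct (H2 e ltac:(unfold e; lra)) as [M2 P2].
  set (x := Rmax M1 M2 + 1).
  assert (X1 := Rmax_l M1 M2). assert (X2 := Rmax_r M1 M2).
  specialize (P1 x ltac:(unfold x; lra)). specialize (P2 x ltac:(unfold x; lra)).
  assert (Rabs (d - d') <= Rabs (f x - d) + Rabs (f x - d')).
  { replace (d - d') with (- (f x - d) + (f x - d')) by ring.
    eapply Rle_trans; [apply Rabs_triang|]. rewrite Rabs_Ropp. lra. }
  unfold e in *. lra.
Qed.

Ltac dd2 := unfold ee, e1, e2, Delta_j;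
    repeat match goal with
    | |- context [Rlt_dec ?a ?b] => destruct (Rlt_dec a b); try lra
    | |- context [Rle_dec ?a ?b] => destruct (Rle_dec a b); try lra
    end.

Lemma ee_le Lc Ls r : 0 < Lc -> 0 < Ls -> 0 < r -> ee Lc Ls r <= Delta_j Ls Lc.
Proof.
  intros Hc HL Hr. assert (M1 := Rmin_l (e1 Ls r) (e2 Lc Ls r)). assert (M2 := Rmin_r (e1 Ls r) (e2 Lc Ls r)).
  fold (ee Lc Ls r) in M1, M2. unfold e1, e2 in M1, M2. unfold Delta_j.
  destruct (Rle_dec Ls 1) as [h1|h1].
  - set (D := Lc + 1 - Ls). assert (HD : 0 < D) by (unfold D; lra).
    assert (ED : 1 - (1 - Ls) ^ 2 / D = (Lc + Ls - Ls * Ls) / D) by (unfold D; field; lra).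
    rewrite ED.
    destruct (Rlt_dec r 1) as [r1|r1].
    + rewrite (Rmin_right 1 Ls) in M1 by lra. rewrite (Rmin_left Ls) in M2 by lra.
      apply Rmult_le_reg_r with D; auto.
      replace ((Lc + Ls - Ls * Ls) / D * D) with (Lc + Ls - Ls * Ls) by (field; lra).
      assert (Id : Lc * (r + (1 - r) * Ls) + (1 - Ls) * (Lc * (1 - r) + Ls) = Lc + Ls - Ls * Ls) by ring.
      unfold D. nra.
    + destruct (Rle_dec Ls 1) as [_|n]; [|lra].
      apply Rle_trans with Ls; [lra|].
      apply Rmult_le_reg_r with D; auto.
      replace ((Lc + Ls - Ls * Ls) / D * D) with (Lc + Ls - Ls * Ls) by (field; lra).
      unfold D. nra.
  - set (k := Rmin (Ls - 1) Lc). assert (K1 := Rmin_l (Ls - 1) Lc). assert (K2 := Rmin_r (Ls - 1) Lc).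
    assert (Hk : 0 < k) by (unfold k; apply Rmin_glb_lt; lra). fold k in K1, K2.
    assert (ED : (if Rle_dec Ls (1 + Lc) then 2 - / Ls else 1 + Lc / (Lc + 1)) = (1 + 2 * k) / (1 + k)).
    { unfold k. destruct (Rle_dec Ls (1 + Lc)).
      - rewrite Rmin_left by lra. field. lra.
      - rewrite Rmin_right by lra. field. lra. }
    rewrite ED.
    assert (G1 : 1 <= (1 + 2 * k) / (1 + k)).
    { apply Rmult_le_reg_r with (1 + k); [lra|]. unfold Rdiv. rewrite Rmult_assoc, Rinv_l by lra. lra. }
    assert (G2 : (1 + 2 * k) / (1 + k) < 2).
    { apply Rmult_lt_reg_r with (1 + k); [lra|]. unfold Rdiv. rewrite Rmult_assoc, Rinv_l by lra. lra. }
    assert (G3 : 1 + k * (2 - (1 + 2 * k) / (1 + k)) = (1 + 2 * k) / (1 + k)) by (field; lra).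
    set (Dl := (1 + 2 * k) / (1 + k)) in *.
    destruct (Rlt_dec r 1) as [r1|r1].
    + rewrite (Rmin_left 1 Ls) in M1 by lra. lra.
    + destruct (Rle_dec Ls 1) as [n|_]; [lra|]. fold k in M2.
      destruct (Rle_lt_dec r Dl) as [h|h]; [lra|].
      assert (Rmax (2 - r) 0 <= 2 - Dl).
      { unfold Rmax. destruct (Rle_dec (2 - r) 0); lra. }
      assert (k * Rmax (2 - r) 0 <= k * (2 - Dl)) by (apply Rmult_le_compat_l; lra).
      lra.
Qed.

Lemma ee_attain Lc Ls : 0 < Lc -> 0 < Ls -> exists r, 0 < r /\ ee Lc Ls r = Delta_j Ls Lc.
Proof.
  intros Hc HL. unfold Delta_j.
  destruct (Rle_dec Ls 1) as [h1|h1].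
  - set (D := Lc + 1 - Ls). assert (HD : 0 < D) by (unfold D; lra).
    assert (ED : 1 - (1 - Ls) ^ 2 / D = (Lc + Ls - Ls * Ls) / D) by (unfold D; field; lra).
    rewrite ED.
    destruct (Rlt_le_dec Ls 1) as [h2|h2].
    + exists (Lc / D). assert (R1 : Lc / D < 1).
      { apply Rmult_lt_reg_r with D; auto. unfold Rdiv. rewrite Rmult_assoc, Rinv_l by lra. unfold D; lra. }
      split; [apply Rdiv_lt_0_compat; auto|].
      unfold ee, e1, e2. destruct (Rlt_dec (Lc / D) 1) as [_|n]; [|lra].
      rewrite (Rmin_right 1 Ls) by lra. rewrite (Rmin_left Ls) by lra.
      assert (A : Lc / D + (1 - Lc / D) * Ls = (Lc + Ls - Ls * Ls) / D) by (unfold D; field; lra).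
      assert (B : Lc * (1 - Lc / D) + Ls = (Lc + Ls - Ls * Ls) / D) by (unfold D; field; lra).
      rewrite A, B. apply Rmin_left. lra.
    + assert (Ls = 1) by lra. subst Ls. exists 1. split; [lra|].
      unfold ee, e1, e2. destruct (Rlt_dec 1 1) as [z|z]; [lra|]. destruct (Rle_dec 1 1) as [_|z2]; [|lra].
      rewrite Rmin_left by lra. unfold D. field. lra.
  - set (k := Rmin (Ls - 1) Lc). assert (K1 := Rmin_l (Ls - 1) Lc). assert (K2 := Rmin_r (Ls - 1) Lc).
    assert (Hk : 0 < k) by (unfold k; apply Rmin_glb_lt; lra). fold k in K1, K2.
    assert (ED : (if Rle_dec Ls (1 + Lc) then 2 - / Ls else 1 + Lc / (Lc + 1)) = (1 + 2 * k) / (1 + k)).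
    { unfold k. destruct (Rle_dec Ls (1 + Lc)).
      - rewrite Rmin_left by lra. field. lra.
      - rewrite Rmin_right by lra. field. lra. }
    rewrite ED.
    assert (G1 : 1 <= (1 + 2 * k) / (1 + k)).
    { apply Rmult_le_reg_r with (1 + k); [lra|]. unfold Rdiv. rewrite Rmult_assoc, Rinv_l by lra. lra. }
    assert (G2 : (1 + 2 * k) / (1 + k) < 2).
    { apply Rmult_lt_reg_r with (1 + k); [lra|]. unfold Rdiv. rewrite Rmult_assoc, Rinv_l by lra. lra. }
    assert (G3 : 1 + k * (2 - (1 + 2 * k) / (1 + k)) = (1 + 2 * k) / (1 + k)) by (field; lra).
    exists ((1 + 2 * k) / (1 + k)). split; [lra|].
    unfold ee, e1, e2. destruct (Rlt_dec ((1 + 2 * k) / (1 + k)) 1) as [n|_]; [lra|].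
    destruct (Rle_dec Ls 1) as [n|_]; [lra|]. fold k.
    rewrite Rmax_left by lra. rewrite G3. apply Rmin_left. lra.
Qed.

Theorem lemma9 (Lc Ls : R) (hLc : 0 < Lc) (hLs : 0 < Ls) :
  (forall r : R, 0 < r -> exists d : R, lim_infty (exponent_fun Lc Ls r) d) /\
  is_lub (fun d => exists r : R, 0 < r /\ lim_infty (exponent_fun Lc Ls r) d)
         (Delta_j Ls Lc).
Proof.
  split.
  - intros r Hr. exists (ee Lc Ls r). apply lim_ee; auto.
  - split.
    + intros d [r [Hr H]]. rewrite (lim_infty_unique _ _ _ H (lim_ee Lc Ls r hLc hLs Hr)).
      apply ee_le; auto.
    + intros b Hb. destruct (ee_attain Lc Ls hLc hLs) as [r [Hr E]].
      apply Hb. exists r. split; auto. rewrite <- E. apply lim_ee; auto.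
Qed.
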